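(* Assume $f_1$ is $C^3$, $f_2$ is $C^2$, $\frac{D}{\gamma_2\lambda_Z(D)}>f_2'(\lambda_Z(D))$, and let $\mu_{c_2}>\mu_{c_1}(D,D)$ be a zero of $A$. Then there exist $\hat\delta>0$, a neighborhood $\Delta$ of $(D,D)$ and a constant $C$ such that the factor coefficient $\gamma(D_1,D_2)(\mu)$ is defined and differentiable in $\mu$ for $\mu\in[\mu_{c_2}-\hat\delta,\mu_{c_2}+\hat\delta]$, $(D_1,D_2)\in\Delta$, and $$\Bigl|\frac{\partial}{\partial\mu}\gamma(D_1,D_2)(\mu)-A'(\mu)\Bigr|\le C\,\|(D_1,D_2)-(D,D)\|$$ for all such $\mu$ and $(D_1,D_2)$, where $\|\cdot\|$ is the Euclidean norm.
   Context: Let $D,\gamma_1,\gamma_2>0$ and $f_1,f_2:[0,\infty)\to[0,\infty)$ bounded, continuously differentiable, $f_i(0)=0$, $f_i'>0$, with $\lim f_1>d/\gamma_1$, $\lim f_2>d/\gamma_2$ for all $d$ in a neighborhood of $D$. Consider the system $N'=(\mu-N)D-Pf_1(N)$, $P'=\gamma_1Pf_1(N)-D_1P-Zf_2(P)$, $Z'=\gamma_2Zf_2(P)-D_2Z$ with $D_1,D_2>0$. $\lambda_P(d),\lambda_Z(d)$ are defined by $f_1(\lambda_P(d))=d/\gamma_1$, $f_2(\lambda_Z(d))=d/\gamma_2$; $\mu_{c_1}(D_1,D_2)=\lambda_P(D_1)+D_1\lambda_Z(D_2)/(D\gamma_1)$. For $\mu>\mu_{c_1}(D_1,D_2)$, $N(\mu,D_1,D_2)$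 is the unique $N\in(0,\mu)$ with $(\mu-N)D-\lambda_Z(D_2)f_1(N)=0$, $Z(\mu,D_1,D_2)=(\gamma_2/D_2)\lambda_Z(D_2)(\gamma_1f_1(N)-D_1)$, and $E_2(\mu,D_1,D_2)=(N,\lambda_Z(D_2),Z)$. For $D_1=D_2=D$ set $A(\mu)=Z(\mu,D,D)\bigl(\frac{D}{\gamma_2\lambda_Z(D)}-f_2'(\lambda_Z(D))\bigr)-\lambda_Z(D)f_1'(N(\mu,D,D))$. The characteristic polynomial $\det(J-xI)$ of the Jacobian $J$ of the system at $E_2(\mu,D_1,D_2)$ is $p_0+p_1x+p_2x^2-x^3$ with $p_i=p_i(\mu,D_1,D_2)$; for $(D_1,D_2)=(D,D)$ and $\mu$ near $\mu_{c_2}$ it equals $(-D-x)(\beta_0(\mu)-A(\mu)x+x^2)$ with $A(\mu)^2-4\beta_0(\mu)<0$. Let $M:(\alpha,\beta,\gamma)\mapsto(\alpha\beta,-\alpha\gamma-\beta,\alpha+\gamma)$ be the multiplication map sending $(\alpha-x,\ \beta-\gamma x+x^2)$ (with $\alpha<0$, $\gamma^2-4\beta<0$) to the coefficients of their product; it is a local diffeomorphism. For $(\mu,D_1,D_2)$ near $(\mu_{c_2},D,D)$ define $(\alpha(D_1,D_2)(\mu),\beta(D_1,D_2)(\mu),\gamma(D_1,D_2)(\mu))$ as the image of $(p_0,p_1,p_2)(\mu,D_1,D_2)$ under the local inverse of $M$ near $(-D,\beta_0(\mu_{c_2}),A(\mu_{c_2}))$; thus the characteristic polynomial factors as $(\alpha(D_1,D_2)(\mu)-x)(\beta(D_1,D_2)(\mu)-\gamma(D_1,D_2)(\mu)x+x^2)$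 and $\gamma(D,D)(\mu)=A(\mu)$. *)

(* Defs.v *)
From Stdlib Require Import Reals Lra ClassicalEpsilon.
Open Scope R_scope.

Definition lim_infty (f : R -> R) (L : R) : Prop :=
  forall e, 0 < e -> exists M, forall x, M <= x -> Rabs (f x - L) < e.

(* lambda_P(d): f1(lambda_P(d)) = d/gamma1, lambda_P(d) >= 0 (unique, f1 strictly increasing) *)
Definition lamP (f1 : R -> R) (g1 d : R) : R :=
  epsilon (inhabits 0) (fun x => 0 <= x /\ f1 x = d / g1).

Definition lamZ (f2 : R -> R) (g2 d : R) : R :=
  epsilon (inhabits 0) (fun x => 0 <= x /\ f2 x = d / g2).

Definition mu_c1 (f1 f2 : R -> R) (D g1 g2 D1 D2 : R) : R :=
  lamP f1 g1 D1 + D1 * lamZ f2 g2 D2 / (D * g1).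

Definition Nfun (f1 f2 : R -> R) (D g2 mu D2 : R) : R :=
  epsilon (inhabits 0)
    (fun N => 0 < N < mu /\ (mu - N) * D - lamZ f2 g2 D2 * f1 N = 0).

Definition Zfun (f1 f2 : R -> R) (D g1 g2 mu D1 D2 : R) : R :=
  (g2 / D2) * lamZ f2 g2 D2 * (g1 * f1 (Nfun f1 f2 D g2 mu D2) - D1).

(* A(mu), with df1, df2 the derivatives of f1, f2 *)
Definition Afun (f1 f2 df1 df2 : R -> R) (D g1 g2 mu : R) : R :=
  Zfun f1 f2 D g1 g2 mu D D * (D / (g2 * lamZ f2 g2 D) - df2 (lamZ f2 g2 D))
  - lamZ f2 g2 D * df1 (Nfun f1 f2 D g2 mu D).

(* Coefficients (p0,p1,p2) of det(J - xI) = p0 + p1 x + p2 x^2 - x^3,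
   J the Jacobian of the vector field
     N' = (mu-N)D - P f1(N),
     P' = g1 P f1(N) - D1 P - Z f2(P),
     Z' = g2 Z f2(P) - D2 Z
   at E2(mu,D1,D2) = (N(mu,D1,D2), lambda_Z(D2), Z(mu,D1,D2)). *)
Definition charcoefs (f1 f2 df1 df2 : R -> R) (D g1 g2 mu D1 D2 : R) : R * R * R :=
  let N := Nfun f1 f2 D g2 mu D2 in
  let P := lamZ f2 g2 D2 in
  let Z := Zfun f1 f2 D g1 g2 mu D1 D2 in
  let j11 := - D - P * df1 N in
  let j12 := - f1 N in
  let j13 := 0 in
  let j21 := g1 * P * df1 N in
  let j22 := g1 * f1 N - D1 - Z * df2 P in
  let j23 := - f2 P in
  let j31 := 0 in
  let j32 := g2 * Z * df2 P in
  let j33 := g2 * f2 P - D2 in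
  let tr := j11 + j22 + j33 in
  let m2 := (j11 * j22 - j12 * j21) + (j11 * j33 - j13 * j31)
            + (j22 * j33 - j23 * j32) in
  let det := j11 * (j22 * j33 - j23 * j32) - j12 * (j21 * j33 - j23 * j31)
             + j13 * (j21 * j32 - j22 * j31) in
  (det, - m2, tr).

Definition Mmap (a b c : R) : R * R * R := (a * b, - a * c - b, a + c).

(* gamma(D1,D2)(mu): third component of the preimage of (p0,p1,p2) under M
   restricted to {alpha < 0, gamma^2 - 4 beta < 0} (on which M is injective,
   so this coincides with the local inverse of M). *)
Definition gammaF (f1 f2 df1 df2 : R -> R) (D g1 g2 D1 D2 mu : R) : R :=
  epsilon (inhabits 0)
    (fun g => exists a b, a < 0 /\ g ^ 2 - 4 * b < 0 /\
       Mmap a b g = charcoefs f1 f2 df1 df2 D g1 g2 mu D1 D2).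

(* Main.v *)
Require Import Defs.
From Stdlib Require Import Reals.
From Stdlib Require Import Lra ClassicalEpsilon.
Open Scope R_scope.

Lemma absle x B : Rabs x <= B -> -B <= x <= B.
Proof. unfold Rabs; destruct Rcase_abs; lra. Qed.
Lemma absle' x B : -B <= x <= B -> Rabs x <= B.
Proof. unfold Rabs; destruct Rcase_abs; lra. Qed.
Lemma abslt x B : Rabs x < B -> -B < x < B.
Proof. unfold Rabs; destruct Rcase_abs; lra. Qed.
Lemma abslt' x B : -B < x < B -> Rabs x < B.
Proof. unfold Rabs; destruct Rcase_abs; lra. Qed.

Lemma cont_eps (u : R -> R) x : continuity_pt u x ->
  forall e, 0 < e -> exists d, 0 < d /\ forall y, Rabs (y - x) < d -> Rabs (u y - u x) < e.
Proof.
  intros H e He. destruct (H e He) as [d [Hd H1]]. exists d; split; [lra|].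
  intros y Hy. destruct (Req_dec y x) as [->|Hne].
  - rewrite Rminus_diag, Rabs_R0; lra.
  - apply (H1 y). split; [split; [exact I| auto] | exact Hy].
Qed.

Lemma eps_cont (u : R -> R) x :
  (forall e, 0 < e -> exists d, 0 < d /\ forall y, Rabs (y - x) < d -> Rabs (u y - u x) < e) ->
  continuity_pt u x.
Proof.
  intros H e He. destruct (H e He) as [d [Hd H1]]. exists d; split; [lra|].
  intros y [_ Hy]. apply H1. exact Hy.
Qed.

Lemma lip_cont (u : R -> R) x r C : 0 < r ->
  (forall y, Rabs (y - x) < r -> Rabs (u y - u x) <= C * Rabs (y - x)) ->
  continuity_pt u x.
Proof.
  intros Hr H. apply eps_cont. intros e He.
  exists (Rmin r (e / (Rabs C + 1))). split.
  { apply Rmin_pos; [lra|]. apply Rdiv_lt_0_compat; [lra| pose proof (Rabs_pos C); lra]. }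
  intros y Hy. pose proof (Rmin_l r (e / (Rabs C + 1))). pose proof (Rmin_r r (e / (Rabs C + 1))).
  eapply Rle_lt_trans. apply H. lra.
  assert (Rabs (y - x) < e / (Rabs C + 1)) by lra.
  pose proof (Rabs_pos C). pose proof (Rabs_pos (y-x)).
  assert (C * Rabs (y - x) <= Rabs C * Rabs (y - x)) by (apply Rmult_le_compat_r; [lra| apply Rle_abs]).
  assert (Rabs C * Rabs (y - x) < e). {
    apply Rle_lt_trans with ((Rabs C + 1) * Rabs (y - x)). nra.
    apply (Rmult_lt_compat_l (Rabs C + 1)) in H2; [|lra].
    replace ((Rabs C + 1) * (e / (Rabs C + 1))) with e in H2 by (field; lra). lra. }
  lra.
Qed.

Lemma der_cont f x l : derivable_pt_lim f x l -> continuity_pt f x.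
Proof. intro H. apply derivable_continuous_pt. exists l. exact H. Qed.

Lemma loclip (f f' : R -> R) :
  (forall x, derivable_pt_lim f x (f' x)) -> (forall x, continuity_pt f' x) ->
  forall B, exists K, 0 <= K /\ forall x y, Rabs x <= B -> Rabs y <= B -> Rabs (f x - f y) <= K * Rabs (x - y).
Proof.
  intros Hd Hc B.
  destruct (Rle_lt_dec (-B) B) as [HB|HB].
  2:{ exists 0. split; [lra|]. intros x y Hx Hy. pose proof (Rabs_pos x). lra. }
  destruct (continuity_ab_maj (fun x => Rabs (f' x)) (-B) B HB) as [M [HM _]].
  { intros c _. apply (continuity_pt_comp f' Rabs). apply Hc. apply Rcontinuity_abs. }
  exists (Rabs (f' M)). split; [apply Rabs_pos|].
  assert (key : forall x y, -B <= x <= B -> -B <= y <= B -> x < y -> Rabs (f x - f y) <= Rabs (f' M) * Rabs (x - y)).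
  { intros x y Hx Hy Hxy. destruct (MVT_cor2 f f' x y Hxy) as [c [Hc1 Hc2]].
    - intros c _. apply Hd.
    - replace (f x - f y) with (- (f y - f x)) by ring. rewrite Rabs_Ropp, Hc1, Rabs_mult.
      replace (x - y) with (- (y - x)) by ring. rewrite Rabs_Ropp.
      apply Rmult_le_compat_r; [apply Rabs_pos|]. apply (HM c). lra. }
  intros x y Hx Hy. apply absle in Hx. apply absle in Hy.
  destruct (Rtotal_order x y) as [H|[H|H]].
  - apply key; lra.
  - subst. rewrite !Rminus_diag, Rabs_R0. pose proof (Rabs_pos (f' M)). lra.
  - rewrite Rabs_minus_sym, (Rabs_minus_sym x). apply key; lra.
Qed.

Lemma deriv_loc f g x l r : 0 < r -> (forall y, Rabs (y - x) < r -> g y = f y) ->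
  derivable_pt_lim f x l -> derivable_pt_lim g x l.
Proof.
  intros Hr Heq H e He. destruct (H e He) as [d Hd].
  assert (Hp : 0 < Rmin d r) by (apply Rmin_pos; [apply cond_pos|lra]).
  exists (mkposreal _ Hp). intros h Hh Hhd. simpl in Hhd.
  pose proof (Rmin_l d r). pose proof (Rmin_r d r).
  rewrite (Heq (x + h)), (Heq x). apply Hd; auto. lra.
  rewrite Rminus_diag, Rabs_R0; lra.
  replace (x + h - x) with h by ring. lra.
Qed.

Lemma impl_deriv (x Q S : R -> R) mu l r :
  derivable_pt_lim S mu l -> continuity_pt Q mu -> Q mu <> 0 -> 0 < r ->
  (forall m, Rabs (m - mu) < r -> (x m - x mu) * Q m = S m - S mu) ->
  derivable_pt_lim x mu (l / Q mu).
Proof.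
  intros HS HQ HQ0 Hr Heq e He.
  set (K := Rabs (Q mu)). assert (HK : 0 < K) by (apply Rabs_pos_lt; auto).
  assert (He1 : 0 < e * K / 4) by (unfold Rdiv; apply Rmult_lt_0_compat; [nra|lra]).
  destruct (HS _ He1) as [d1 Hd1].
  set (e2 := Rmin (K / 2) (e * K * K / (4 * (Rabs l + 1)))).
  assert (He2 : 0 < e2).
  { apply Rmin_pos; [lra|]. pose proof (Rabs_pos l). apply Rdiv_lt_0_compat; [|lra].
    apply Rmult_lt_0_compat; [nra|lra]. }
  destruct (cont_eps Q mu HQ e2 He2) as [d2 [Hd2 HQd]].
  assert (Hp : 0 < Rmin d1 (Rmin d2 r)) by (repeat apply Rmin_pos; try lra; apply cond_pos).
  exists (mkposreal _ Hp). intros h Hh Hhd. simpl in Hhd.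
  pose proof (Rmin_l d1 (Rmin d2 r)). pose proof (Rmin_r d1 (Rmin d2 r)).
  pose proof (Rmin_l d2 r). pose proof (Rmin_r d2 r).
  assert (Hb : Rabs (Q (mu + h) - Q mu) < e2) by (apply HQd; replace (mu + h - mu) with h by ring; lra).
  pose proof (Rmin_l (K / 2) (e * K * K / (4 * (Rabs l + 1)))) as He2a.
  pose proof (Rmin_r (K / 2) (e * K * K / (4 * (Rabs l + 1)))) as He2b. fold e2 in He2a, He2b.
  set (b := Q (mu + h)) in *. set (q0 := Q mu) in *.
  assert (Hbq : K / 2 <= Rabs b).
  { pose proof (Rabs_triang_inv q0 (q0 - b)). replace (q0 - (q0 - b)) with b in H3 by ring.
    rewrite Rabs_minus_sym in Hb. fold K in H3. lra. }
  assert (Hb0 : b <> 0) by (intro Hz; rewrite Hz, Rabs_R0 in Hbq; lra).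
  set (a := (S (mu + h) - S mu) / h).
  assert (Ha : Rabs (a - l) < e * K / 4) by (apply Hd1; auto; lra).
  assert (Hx : (x (mu + h) - x mu) / h = a / b).
  { unfold a. rewrite <- (Heq (mu + h)). fold b. field. split; auto.
    replace (mu + h - mu) with h by ring. lra. }
  rewrite Hx.
  replace (a / b - l / q0) with (((a - l) * q0 - l * (b - q0)) / (b * q0)) by (field; auto).
  unfold Rdiv. rewrite Rabs_mult, Rabs_inv, Rabs_mult.
  assert (Hnum : Rabs ((a - l) * q0 - l * (b - q0)) < e * K / 4 * K + Rabs l * Rabs (b - q0)).
  { eapply Rle_lt_trans. unfold Rminus at 1. apply Rabs_triang. rewrite Rabs_Ropp, !Rabs_mult.
    fold K. apply Rplus_lt_compat_r. apply Rmult_lt_compat_r; lra. }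
  assert (Hl : Rabs l * Rabs (b - q0) <= e * K * K / 4).
  { pose proof (Rabs_pos l). assert (Rabs (b - q0) < e * K * K / (4 * (Rabs l + 1))) by lra.
    apply Rle_trans with ((Rabs l + 1) * (e * K * K / (4 * (Rabs l + 1)))).
    pose proof (Rabs_pos (b - q0)). nra. right; field. lra. }
  fold K. apply Rlt_le_trans with ((e * K * K / 2) * / (Rabs b * K)).
  - apply Rmult_lt_compat_r. apply Rinv_0_lt_compat; nra. lra.
  - apply Rle_trans with ((e * K * K / 2) * / (K / 2 * K)).
    + apply Rmult_le_compat_l. nra. apply Rinv_le_contravar; nra.
    + replace ((e * K * K / 2) * / (K / 2 * K)) with e by (field; lra). lra.
Qed.

Section Lam.
Variables (f df : R -> R) (g L : R).
Hypotheses (Hd : forall x, derivable_pt_lim f x (df x)) (Hdc : forall x, continuity_pt df x)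
  (Hpos : forall x, 0 <= x -> 0 < df x) (Hf0 : f 0 = 0) (Hg : 0 < g) (HL : lim_infty f L).

Definition lamG d := epsilon (inhabits 0) (fun x => 0 <= x /\ f x = d / g).

Lemma f_incr x y : 0 <= x -> x < y -> f x < f y.
Proof.
  intros Hx Hxy. destruct (MVT_cor2 f df x y Hxy) as [c [Hc1 Hc2]].
  intros c _; apply Hd. assert (0 < df c) by (apply Hpos; lra). nra.
Qed.

Lemma f_mono x y : 0 <= x -> x <= y -> f x <= f y.
Proof. intros Hx [H|H]. left; apply f_incr; auto. subst; lra. Qed.

Lemma f_cont : continuity f.
Proof. intro x. apply (der_cont f x (df x)). apply Hd. Qed.

Lemma lam_spec d : 0 < d -> d / g < L -> 0 < lamG d /\ f (lamG d) = d / g.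
Proof.
  intros Hd0 HdL.
  assert (Hex : exists x, 0 <= x /\ f x = d / g).
  { destruct (HL (L - d / g)) as [M HM]; [lra|].
    set (y := Rmax M 1). assert (Hy : 0 < y) by (unfold y; pose proof (Rmax_r M 1); lra).
    pose proof (HM y (Rmax_l M 1)) as Hfy. apply abslt in Hfy.
    destruct (IVT (fun x => f x - d / g) 0 y) as [z [Hz1 Hz2]].
    - intro x. apply continuity_pt_minus. apply f_cont. apply continuity_pt_const. intros a b; auto.
    - exact Hy.
    - rewrite Hf0. assert (0 < d / g) by (apply Rdiv_lt_0_compat; lra). lra.
    - lra.
    - exists z. split; [lra|]. lra. }
  pose proof (epsilon_spec (inhabits 0) (fun x => 0 <= x /\ f x = d / g) Hex) as [H1 H2].
  fold (lamG d) in H1, H2. split; auto.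
  destruct H1 as [H1|H1]; auto. rewrite <- H1, Hf0 in H2.
  assert (0 < d / g) by (apply Rdiv_lt_0_compat; lra). lra.
Qed.

Lemma lam_uniq d x : 0 < d -> d / g < L -> 0 <= x -> f x = d / g -> x = lamG d.
Proof.
  intros Hd0 HdL Hx Hfx. destruct (lam_spec d Hd0 HdL) as [H1 H2].
  destruct (Rtotal_order x (lamG d)) as [H|[H|H]]; auto.
  - pose proof (f_incr x (lamG d) Hx H). lra.
  - pose proof (f_incr (lamG d) x ltac:(lra) H). lra.
Qed.

Lemma lam_lip d0 r0 : 0 < d0 -> 0 < r0 -> (forall d, Rabs (d - d0) < r0 -> d / g < L) ->
  exists r K, 0 < r /\ 0 <= K /\ forall d d', Rabs (d - d0) <= r -> Rabs (d' - d0) <= r ->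
    0 < lamG d /\ f (lamG d) = d / g /\ Rabs (lamG d - lamG d') <= K * Rabs (d - d').
Proof.
  intros Hd0 Hr0 Hnb.
  assert (HL0 : d0 / g < L) by (apply Hnb; rewrite Rminus_diag, Rabs_R0; lra).
  destruct (lam_spec d0 Hd0 HL0) as [Hx0 Hfx0]. set (x0 := lamG d0) in *.
  set (m := df x0 / 2). assert (Hm : 0 < m) by (unfold m; pose proof (Hpos x0); lra).
  destruct (cont_eps df x0 (Hdc x0) m Hm) as [rho [Hrho Hcr]].
  set (s := Rmin (rho / 2) (x0 / 2)).
  assert (Hs : 0 < s) by (apply Rmin_pos; lra).
  assert (Hs1 : s <= rho / 2) by apply Rmin_l. assert (Hs2 : s <= x0 / 2) by apply Rmin_r.
  assert (slope : forall x y, x0 - s <= x -> x < y -> y <= x0 + s -> m * (y - x) <= f y - f x).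
  { intros x y Hx Hxy Hy. destruct (MVT_cor2 f df x y Hxy) as [c [Hc1 Hc2]].
    intros c _; apply Hd. rewrite Hc1.
    assert (Rabs (c - x0) < rho) by (apply abslt'; lra).
    apply Hcr in H. apply abslt in H. unfold m in *. nra. }
  assert (Hup : f (x0 + s) >= d0 / g + m * s).
  { pose proof (slope x0 (x0 + s) ltac:(lra) ltac:(lra) ltac:(lra)). lra. }
  assert (Hlo : f (x0 - s) <= d0 / g - m * s).
  { pose proof (slope (x0 - s) x0 ltac:(lra) ltac:(lra) ltac:(lra)). lra. }
  set (r := Rmin (Rmin (r0 / 2) (d0 / 2)) (g * m * s / 2)).
  assert (Hr : 0 < r). { unfold r. repeat apply Rmin_pos; try lra.
    apply Rdiv_lt_0_compat; [|lra]. apply Rmult_lt_0_compat; [|lra]. apply Rmult_lt_0_compat; lra. }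
  assert (Hr1 : r <= r0 / 2) by (unfold r; eapply Rle_trans; [apply Rmin_l| apply Rmin_l]).
  assert (Hr2 : r <= d0 / 2) by (unfold r; eapply Rle_trans; [apply Rmin_l| apply Rmin_r]).
  assert (Hr3 : r <= g * m * s / 2) by (unfold r; apply Rmin_r).
  assert (inI : forall d, Rabs (d - d0) <= r ->
     0 < lamG d /\ f (lamG d) = d / g /\ x0 - s <= lamG d <= x0 + s).
  { intros d Hdd. apply absle in Hdd.
    assert (Hdp : 0 < d) by lra.
    assert (HdL : d / g < L) by (apply Hnb; apply abslt'; lra).
    destruct (lam_spec d Hdp HdL) as [Hl1 Hl2]. split; [auto|split; [auto|]].
    assert (Hdg : Rabs (d / g - d0 / g) <= m * s / 2).
    { replace (d / g - d0 / g) with ((d - d0) / g) by (field; lra).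
      unfold Rdiv. rewrite Rabs_mult, Rabs_inv, (Rabs_right g) by lra.
      apply Rmult_le_reg_r with g; [lra|]. rewrite Rmult_assoc, Rinv_l, Rmult_1_r by lra.
      apply absle'. split; nra. }
    apply absle in Hdg. split.
    - destruct (Rlt_le_dec (lamG d) (x0 - s)) as [H|H]; [|auto].
      pose proof (f_incr (lamG d) (x0 - s) ltac:(lra) H). nra.
    - destruct (Rle_lt_dec (lamG d) (x0 + s)) as [H|H]; [auto|].
      pose proof (f_incr (x0 + s) (lamG d) ltac:(lra) H). nra. }
  exists r, (/ (g * m)). split; [auto|]. split.
  { left. apply Rinv_0_lt_compat. nra. }
  intros d d' Hd1 Hd2. destruct (inI d Hd1) as [A1 [A2 A3]]. destruct (inI d' Hd2) as [B1 [B2 B3]].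
  split; [auto|split; [auto|]].
  assert (key : m * Rabs (lamG d - lamG d') <= Rabs (d / g - d' / g)).
  { rewrite <- A2, <- B2.
    destruct (Rtotal_order (lamG d) (lamG d')) as [H|[H|H]].
    - pose proof (slope (lamG d) (lamG d') ltac:(lra) H ltac:(lra)).
      rewrite (Rabs_left (lamG d - lamG d')) by lra. rewrite (Rabs_left (f (lamG d) - f (lamG d'))) by nra. nra.
    - rewrite H, !Rminus_diag, Rabs_R0. lra.
    - pose proof (slope (lamG d') (lamG d) ltac:(lra) H ltac:(lra)).
      rewrite (Rabs_right (lamG d - lamG d')) by lra. rewrite (Rabs_right (f (lamG d) - f (lamG d'))) by nra. nra. }
  replace (d / g - d' / g) with ((d - d') * / g) in key by (field; lra).
  rewrite Rabs_mult, (Rabs_inv g), (Rabs_right g) in key by lra.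
  apply Rmult_le_reg_l with m; [lra|].
  replace (m * (/ (g * m) * Rabs (d - d'))) with (Rabs (d - d') * / g) by (field; lra). lra.
Qed.

End Lam.

Section LBS.
Variables (mc Dc : R).

Definition inS t m d1 d2 := Rabs (m - mc) <= t /\ Rabs (d1 - Dc) <= t /\ Rabs (d2 - Dc) <= t.
Definition dist3 m d1 d2 m' d1' d2' := Rabs (m - m') + Rabs (d1 - d1') + Rabs (d2 - d2').

Definition LB t (u : R -> R -> R -> R) := exists B C, 0 <= C /\
  forall m d1 d2 m' d1' d2', inS t m d1 d2 -> inS t m' d1' d2' ->
    Rabs (u m d1 d2) <= B /\ Rabs (u m d1 d2 - u m' d1' d2') <= C * dist3 m d1 d2 m' d1' d2'.

Lemma dist3_pos m d1 d2 m' d1' d2' : 0 <= dist3 m d1 d2 m' d1' d2'.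
Proof. unfold dist3. pose proof (Rabs_pos (m - m')). pose proof (Rabs_pos (d1 - d1')). pose proof (Rabs_pos (d2 - d2')). lra. Qed.

Lemma LB_mono t t' u : t' <= t -> LB t u -> LB t' u.
Proof.
  intros Ht [B [C [HC H]]]. exists B, C. split; auto. intros m d1 d2 m' d1' d2' H1 H2.
  apply H; unfold inS in *; intuition lra.
Qed.

Lemma LB_const t c : LB t (fun _ _ _ => c).
Proof.
  exists (Rabs c), 0. split; [lra|]. intros. split; [lra|].
  rewrite Rminus_diag, Rabs_R0. pose proof (dist3_pos m d1 d2 m' d1' d2'). lra.
Qed.

Lemma LB_m t : LB t (fun m _ _ => m).
Proof.
  exists (Rabs mc + t), 1. split; [lra|]. intros m d1 d2 m' d1' d2' [H1 _] _. split.
  - pose proof (Rabs_triang_inv m mc). lra.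
  - unfold dist3. pose proof (Rabs_pos (d1 - d1')). pose proof (Rabs_pos (d2 - d2')). lra.
Qed.

Lemma LB_d1 t : LB t (fun _ d1 _ => d1).
Proof.
  exists (Rabs Dc + t), 1. split; [lra|]. intros m d1 d2 m' d1' d2' [_ [H1 _]] _. split.
  - pose proof (Rabs_triang_inv d1 Dc). lra.
  - unfold dist3. pose proof (Rabs_pos (m - m')). pose proof (Rabs_pos (d2 - d2')). lra.
Qed.

Lemma LB_d2 t : LB t (fun _ _ d2 => d2).
Proof.
  exists (Rabs Dc + t), 1. split; [lra|]. intros m d1 d2 m' d1' d2' [_ [_ H1]] _. split.
  - pose proof (Rabs_triang_inv d2 Dc). lra.
  - unfold dist3. pose proof (Rabs_pos (m - m')). pose proof (Rabs_pos (d1 - d1')). lra.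
Qed.

Lemma LB_plus t u w : LB t u -> LB t w -> LB t (fun m d1 d2 => u m d1 d2 + w m d1 d2).
Proof.
  intros [B1 [C1 [HC1 H1]]] [B2 [C2 [HC2 H2]]]. exists (B1 + B2), (C1 + C2). split; [lra|].
  intros m d1 d2 m' d1' d2' Hs Hs'. destruct (H1 _ _ _ _ _ _ Hs Hs') as [A1 A2].
  destruct (H2 _ _ _ _ _ _ Hs Hs') as [E1 E2]. split.
  - eapply Rle_trans. apply Rabs_triang. lra.
  - replace (u m d1 d2 + w m d1 d2 - (u m' d1' d2' + w m' d1' d2')) with
      ((u m d1 d2 - u m' d1' d2') + (w m d1 d2 - w m' d1' d2')) by ring.
    eapply Rle_trans. apply Rabs_triang. lra.
Qed.

Lemma LB_opp t u : LB t u -> LB t (fun m d1 d2 => - u m d1 d2).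
Proof.
  intros [B1 [C1 [HC1 H1]]]. exists B1, C1. split; [lra|].
  intros m d1 d2 m' d1' d2' Hs Hs'. destruct (H1 _ _ _ _ _ _ Hs Hs') as [A1 A2].
  rewrite Rabs_Ropp. split; auto.
  replace (- u m d1 d2 - - u m' d1' d2') with (- (u m d1 d2 - u m' d1' d2')) by ring.
  rewrite Rabs_Ropp. auto.
Qed.

Lemma LB_minus t u w : LB t u -> LB t w -> LB t (fun m d1 d2 => u m d1 d2 - w m d1 d2).
Proof. intros H1 H2. apply (LB_plus t u (fun m d1 d2 => - w m d1 d2)); auto. apply LB_opp; auto. Qed.

Lemma LB_mult t u w : LB t u -> LB t w -> LB t (fun m d1 d2 => u m d1 d2 * w m d1 d2).
Proof.
  intros [B1 [C1 [HC1 H1]]] [B2 [C2 [HC2 H2]]].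
  exists (Rabs B1 * Rabs B2), (Rabs B1 * C2 + Rabs B2 * C1). split.
  { pose proof (Rabs_pos B1); pose proof (Rabs_pos B2). nra. }
  intros m d1 d2 m' d1' d2' Hs Hs'. destruct (H1 _ _ _ _ _ _ Hs Hs') as [A1 A2].
  destruct (H2 _ _ _ _ _ _ Hs Hs') as [E1 E2].
  destruct (H1 _ _ _ _ _ _ Hs' Hs) as [A1' _]. destruct (H2 _ _ _ _ _ _ Hs' Hs) as [E1' _].
  pose proof (Rle_abs B1). pose proof (Rle_abs B2).
  pose proof (Rabs_pos (u m d1 d2)). pose proof (Rabs_pos (w m d1 d2)).
  pose proof (Rabs_pos (u m' d1' d2')). pose proof (Rabs_pos (w m' d1' d2')).
  pose proof (dist3_pos m d1 d2 m' d1' d2').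
  split.
  - rewrite Rabs_mult. apply Rmult_le_compat; lra.
  - replace (u m d1 d2 * w m d1 d2 - u m' d1' d2' * w m' d1' d2') with
      (u m d1 d2 * (w m d1 d2 - w m' d1' d2') + w m' d1' d2' * (u m d1 d2 - u m' d1' d2')) by ring.
    eapply Rle_trans. apply Rabs_triang. rewrite !Rabs_mult.
    pose proof (Rabs_pos (w m d1 d2 - w m' d1' d2')). pose proof (Rabs_pos (u m d1 d2 - u m' d1' d2')).
    assert (Rabs (u m d1 d2) * Rabs (w m d1 d2 - w m' d1' d2') <= Rabs B1 * (C2 * dist3 m d1 d2 m' d1' d2'))
      by (apply Rmult_le_compat; lra).
    assert (Rabs (w m' d1' d2') * Rabs (u m d1 d2 - u m' d1' d2') <= Rabs B2 * (C1 * dist3 m d1 d2 m' d1' d2'))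
      by (apply Rmult_le_compat; lra).
    nra.
Qed.

Lemma LB_inv t w c : LB t w -> 0 < c -> (forall m d1 d2, inS t m d1 d2 -> c <= Rabs (w m d1 d2)) ->
  LB t (fun m d1 d2 => / w m d1 d2).
Proof.
  intros [B1 [C1 [HC1 H1]]] Hc Hlow. exists (/ c), (C1 / (c * c)). split.
  { apply Rmult_le_pos; auto. left; apply Rinv_0_lt_compat; nra. }
  intros m d1 d2 m' d1' d2' Hs Hs'. destruct (H1 _ _ _ _ _ _ Hs Hs') as [A1 A2].
  pose proof (Hlow _ _ _ Hs) as L1. pose proof (Hlow _ _ _ Hs') as L2.
  assert (w m d1 d2 <> 0) by (intro Z; rewrite Z, Rabs_R0 in L1; lra).
  assert (w m' d1' d2' <> 0) by (intro Z; rewrite Z, Rabs_R0 in L2; lra).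
  split.
  - rewrite Rabs_inv. apply Rinv_le_contravar; lra.
  - replace (/ w m d1 d2 - / w m' d1' d2') with (- (w m d1 d2 - w m' d1' d2') * / (w m d1 d2 * w m' d1' d2'))
      by (field; auto).
    rewrite Rabs_mult, Rabs_Ropp, Rabs_inv, Rabs_mult.
    apply Rle_trans with ((C1 * dist3 m d1 d2 m' d1' d2') * / (c * c)).
    + apply Rmult_le_compat; try lra. apply Rabs_pos. left; apply Rinv_0_lt_compat.
      apply Rmult_lt_0_compat; lra. apply Rinv_le_contravar. nra. apply Rmult_le_compat; lra.
    + right. unfold Rdiv. ring.
Qed.

Lemma LB_div t u w c : LB t u -> LB t w -> 0 < c -> (forall m d1 d2, inS t m d1 d2 -> c <= Rabs (w m d1 d2)) ->
  LB t (fun m d1 d2 => u m d1 d2 / w m d1 d2).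
Proof. intros. unfold Rdiv. apply (LB_mult t u (fun m d1 d2 => / w m d1 d2)); auto. eapply LB_inv; eauto. Qed.

Lemma LB_divc t u c : LB t u -> c <> 0 -> LB t (fun m d1 d2 => u m d1 d2 / c).
Proof. intros. apply (LB_div t u (fun _ _ _ => c) (Rabs c)); auto. apply LB_const. apply Rabs_pos_lt; auto.
  intros; lra. Qed.

Lemma LB_ext t u w : (forall m d1 d2, u m d1 d2 = w m d1 d2) -> LB t u -> LB t w.
Proof. intros E [B [C [HC H]]]. exists B, C. split; auto. intros. rewrite <- !E. auto. Qed.

Lemma LB_pow2 t u : LB t u -> LB t (fun m d1 d2 => u m d1 d2 ^ 2).
Proof. intros H. apply (LB_ext t (fun m d1 d2 => u m d1 d2 * u m d1 d2)).
  intros; ring. apply LB_mult; auto. Qed.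

Definition loclipP (f : R -> R) := forall B, exists K, 0 <= K /\
  forall x y, Rabs x <= B -> Rabs y <= B -> Rabs (f x - f y) <= K * Rabs (x - y).

Lemma LB_comp t f u : loclipP f -> LB t u -> LB t (fun m d1 d2 => f (u m d1 d2)).
Proof.
  intros Hf [B1 [C1 [HC1 H1]]]. destruct (Hf B1) as [K [HK HKf]].
  exists (Rabs (f 0) + K * B1), (K * C1). split; [nra|].
  intros m d1 d2 m' d1' d2' Hs Hs'. destruct (H1 _ _ _ _ _ _ Hs Hs') as [A1 A2].
  destruct (H1 _ _ _ _ _ _ Hs' Hs) as [A1' _]. pose proof (Rabs_pos (u m d1 d2)).
  split.
  - assert (Rabs (f (u m d1 d2) - f 0) <= K * Rabs (u m d1 d2 - 0)) by (apply HKf; rewrite ?Rabs_R0; lra).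
    rewrite Rminus_0_r in H0. pose proof (Rabs_triang_inv (f (u m d1 d2)) (f 0)).
    assert (K * Rabs (u m d1 d2) <= K * B1) by (apply Rmult_le_compat_l; lra). lra.
  - eapply Rle_trans. apply HKf; auto. rewrite Rmult_assoc. apply Rmult_le_compat_l; auto.
Qed.

End LBS.

Ltac lbsolve :=
  repeat match goal with
  | |- LB _ _ _ (fun m d1 d2 => @?a m d1 d2 + @?b m d1 d2) => apply (LB_plus _ _ _ a b)
  | |- LB _ _ _ (fun m d1 d2 => @?a m d1 d2 - @?b m d1 d2) => apply (LB_minus _ _ _ a b)
  | |- LB _ _ _ (fun m d1 d2 => @?a m d1 d2 * @?b m d1 d2) => apply (LB_mult _ _ _ a b)
  | |- LB _ _ _ (fun m d1 d2 => - @?a m d1 d2) => apply (LB_opp _ _ _ a)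
  | |- LB _ _ _ (fun m d1 d2 => @?a m d1 d2 ^ 2) => apply (LB_pow2 _ _ _ a)
  | |- LB _ _ _ (fun m d1 d2 => @?a m d1 d2 / ?c) => apply (LB_divc _ _ _ a c); [|try lra]
  | |- LB _ _ _ (fun m d1 d2 => ?c) => apply LB_const
  | |- LB _ _ _ (fun m d1 d2 => m) => apply LB_m
  | |- LB _ _ _ (fun m d1 d2 => d1) => apply LB_d1
  | |- LB _ _ _ (fun m d1 d2 => d2) => apply LB_d2
  end.
From Coquelicot Require Import Coquelicot.
Open Scope R_scope.

Section Main.
Variables (D g1 g2 : R) (f1 df1 d2f1 d3f1 f2 df2 d2f2 : R -> R) (L1 L2 mu_c2 : R).
Hypotheses (HD : 0 < D) (Hg1 : 0 < g1) (Hg2 : 0 < g2)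
  (Hdf1 : forall x, derivable_pt_lim f1 x (df1 x))
  (Hd2f1 : forall x, derivable_pt_lim df1 x (d2f1 x))
  (Hd3f1 : forall x, derivable_pt_lim d2f1 x (d3f1 x))
  (Hc3f1 : continuity d3f1)
  (Hdf2 : forall x, derivable_pt_lim f2 x (df2 x))
  (Hd2f2 : forall x, derivable_pt_lim df2 x (d2f2 x))
  (Hc2f2 : continuity d2f2)
  (Hf10 : f1 0 = 0) (Hf20 : f2 0 = 0)
  (Hdf1p : forall x, 0 <= x -> 0 < df1 x)
  (Hdf2p : forall x, 0 <= x -> 0 < df2 x)
  (HL1 : lim_infty f1 L1) (HL2 : lim_infty f2 L2)
  (Hstab : df2 (lamZ f2 g2 D) < D / (g2 * lamZ f2 g2 D))
  (Hmuc2 : mu_c1 f1 f2 D g1 g2 D D < mu_c2)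
  (HA0 : Afun f1 f2 df1 df2 D g1 g2 mu_c2 = 0).
Variables (rP KP rL KL B1 : R).
Hypotheses (HrP : 0 < rP) (HKP : 0 <= KP) (HrL : 0 < rL) (HKL : 0 <= KL) (HB1 : 0 <= B1)
  (HPl : forall d d', Rabs (d - D) <= rP -> Rabs (d' - D) <= rP ->
     0 < lamZ f2 g2 d /\ f2 (lamZ f2 g2 d) = d / g2 /\ Rabs (lamZ f2 g2 d - lamZ f2 g2 d') <= KP * Rabs (d - d'))
  (HLl : forall d d', Rabs (d - D) <= rL -> Rabs (d' - D) <= rL ->
     0 < lamP f1 g1 d /\ f1 (lamP f1 g1 d) = d / g1 /\ Rabs (lamP f1 g1 d - lamP f1 g1 d') <= KL * Rabs (d - d'))
  (HB1f : forall x, 0 <= x -> f1 x <= B1).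

Notation PP d2 := (lamZ f2 g2 d2).
Notation NN m d2 := (Nfun f1 f2 D g2 m d2).

Lemma cdf1 x : continuity_pt df1 x. Proof. apply (der_cont _ _ _ (Hd2f1 x)). Qed.
Lemma cdf2 x : continuity_pt df2 x. Proof. apply (der_cont _ _ _ (Hd2f2 x)). Qed.
Lemma cd2f1 x : continuity_pt d2f1 x. Proof. apply (der_cont _ _ _ (Hd3f1 x)). Qed.

Lemma lip_f1 : loclipP f1. Proof. intro B. apply (loclip f1 df1 Hdf1 cdf1). Qed.
Lemma lip_df1 : loclipP df1. Proof. intro B. apply (loclip df1 d2f1 Hd2f1 cd2f1). Qed.
Lemma lip_d2f1 : loclipP d2f1. Proof. intro B. apply (loclip d2f1 d3f1 Hd3f1 Hc3f1). Qed.
Lemma lip_f2 : loclipP f2. Proof. intro B. apply (loclip f2 df2 Hdf2 cdf2). Qed.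
Lemma lip_df2 : loclipP df2. Proof. intro B. apply (loclip df2 d2f2 Hd2f2 Hc2f2). Qed.

Lemma f1_incr x y : 0 <= x -> x < y -> f1 x < f1 y.
Proof. apply (f_incr f1 df1 Hdf1 Hdf1p). Qed.
Lemma f1_mono x y : 0 <= x -> x <= y -> f1 x <= f1 y.
Proof. apply (f_mono f1 df1 Hdf1 Hdf1p). Qed.
Lemma f1_cont : continuity f1.
Proof. apply (f_cont f1 df1 Hdf1). Qed.

Lemma N_spec m d2 : 0 < m -> 0 < PP d2 ->
  0 < NN m d2 < m /\ (m - NN m d2) * D - PP d2 * f1 (NN m d2) = 0.
Proof.
  intros Hm HP.
  assert (Hex : exists N, 0 < N < m /\ (m - N) * D - PP d2 * f1 N = 0).
  { destruct (IVT (fun x => PP d2 * f1 x - (m - x) * D) 0 m) as [z [Hz1 Hz2]].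
    - intro x. apply continuity_pt_minus. apply continuity_pt_mult. apply continuity_pt_const.
      intros a b; auto. apply f1_cont. apply continuity_pt_mult.
      apply continuity_pt_minus. apply continuity_pt_const. intros a b; auto. apply derivable_continuous_pt, derivable_pt_id.
      apply continuity_pt_const. intros a b; auto.
    - exact Hm.
    - rewrite Hf10. nra.
    - pose proof (f1_incr 0 m ltac:(lra) Hm). rewrite Hf10 in H. nra.
    - exists z. assert (z <> 0). { intro E. subst z. rewrite Hf10 in Hz2. nra. }
      assert (z <> m). { intro E. subst z. pose proof (f1_incr 0 m ltac:(lra) Hm). rewrite Hf10 in H0. nra. }
      split; [lra|]. lra. }
  exact (epsilon_spec (inhabits 0) _ Hex).
Qed.

Lemma N_lip m d2 m' d2' : 0 < m -> 0 < PP d2 -> 0 < m' -> 0 < PP d2' ->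
  D * Rabs (NN m d2 - NN m' d2') <= D * Rabs (m - m') + B1 * Rabs (PP d2 - PP d2').
Proof.
  intros Hm HP Hm' HP'.
  destruct (N_spec m d2 Hm HP) as [[N1 N2] E]. destruct (N_spec m' d2' Hm' HP') as [[N1' N2'] E'].
  set (N := NN m d2) in *. set (N' := NN m' d2') in *. set (P := PP d2) in *. set (P' := PP d2') in *.
  pose proof (HB1f N ltac:(lra)) as B1a. pose proof (HB1f N' ltac:(lra)) as B1b.
  assert (Fa : f1 0 <= f1 N) by (apply f1_mono; lra). assert (Fb : f1 0 <= f1 N') by (apply f1_mono; lra).
  rewrite Hf10 in Fa, Fb.
  pose proof (Rle_abs (m - m')) as M1. pose proof (Rle_abs (m' - m)) as M2. rewrite Rabs_minus_sym in M2.
  pose proof (Rle_abs (P - P')) as Q1. pose proof (Rle_abs (P' - P)) as Q2. rewrite Rabs_minus_sym in Q2.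
  pose proof (Rabs_pos (P - P')) as Q3.
  destruct (Rle_dec N' N) as [Hle|Hle].
  - pose proof (f1_mono N' N ltac:(lra) Hle) as Mo.
    rewrite Rabs_right by lra.
    assert (D * (N - N') = D * (m - m') - P * (f1 N - f1 N') - (P - P') * f1 N') by nra.
    assert (P * (f1 N - f1 N') >= 0) by nra.
    assert (- (P - P') * f1 N' <= B1 * Rabs (P - P')) by nra.
    nra.
  - pose proof (f1_mono N N' ltac:(lra) ltac:(lra)) as Mo.
    rewrite Rabs_left by lra.
    assert (D * (N' - N) = D * (m' - m) - P' * (f1 N' - f1 N) - (P' - P) * f1 N) by nra.
    assert (P' * (f1 N' - f1 N) >= 0) by nra.
    assert (- (P' - P) * f1 N <= B1 * Rabs (P - P')) by nra.
    nra.
Qed.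

Definition tmax := Rmin (Rmin rP rL) (Rmin (D / 2) (mu_c2 / 2)).

Lemma muc1_pos : 0 < mu_c1 f1 f2 D g1 g2 D D.
Proof.
  unfold mu_c1. assert (H0 : Rabs (D - D) <= rP) by (rewrite Rminus_diag, Rabs_R0; lra).
  assert (H1 : Rabs (D - D) <= rL) by (rewrite Rminus_diag, Rabs_R0; lra).
  destruct (HPl D D H0 H0) as [A _]. destruct (HLl D D H1 H1) as [B _].
  assert (0 < D * lamZ f2 g2 D / (D * g1)). { apply Rdiv_lt_0_compat; apply Rmult_lt_0_compat; lra. }
  lra.
Qed.

Lemma tmax_pos : 0 < tmax.
Proof. pose proof muc1_pos. unfold tmax. repeat apply Rmin_pos; lra. Qed.

Lemma tmax_le : tmax <= rP /\ tmax <= rL /\ tmax <= D / 2 /\ tmax <= mu_c2 / 2.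
Proof.
  unfold tmax. pose proof (Rmin_l (Rmin rP rL) (Rmin (D / 2) (mu_c2 / 2))).
  pose proof (Rmin_r (Rmin rP rL) (Rmin (D / 2) (mu_c2 / 2))).
  pose proof (Rmin_l rP rL). pose proof (Rmin_r rP rL).
  pose proof (Rmin_l (D / 2) (mu_c2 / 2)). pose proof (Rmin_r (D / 2) (mu_c2 / 2)). lra.
Qed.

Definition inD t m d1 d2 := inS mu_c2 D t m d1 d2.

Lemma inD_facts t m d1 d2 : t <= tmax -> inD t m d1 d2 ->
  mu_c2 / 2 <= m /\ D / 2 <= d1 /\ D / 2 <= d2 /\ Rabs (d2 - D) <= rP /\ Rabs (d1 - D) <= rL
  /\ m <= mu_c2 + t.
Proof.
  intros Ht [H1 [H2 H3]]. pose proof tmax_le. apply absle in H1. pose proof (absle _ _ H2).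
  pose proof (absle _ _ H3). repeat split; try lra.
Qed.

Lemma PP_pos t m d1 d2 : t <= tmax -> inD t m d1 d2 -> 0 < PP d2 /\ f2 (PP d2) = d2 / g2.
Proof. intros Ht H. destruct (inD_facts t m d1 d2 Ht H) as [_ [_ [_ [A _]]]].
  destruct (HPl d2 d2 A A) as [X [Y _]]; auto. Qed.

Lemma NN_pos t m d1 d2 : t <= tmax -> inD t m d1 d2 ->
  0 < NN m d2 < m /\ (m - NN m d2) * D - PP d2 * f1 (NN m d2) = 0.
Proof. intros Ht H. apply N_spec. pose proof (inD_facts t m d1 d2 Ht H). pose proof muc1_pos.
  assert (0 < mu_c2) by lra. lra. apply (PP_pos t m d1 d2 Ht H). Qed.

Lemma LB_PP t : t <= tmax -> LB mu_c2 D t (fun _ _ d2 => PP d2).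
Proof.
  intros Ht. exists (Rabs (PP D) + KP * t), KP. split; auto.
  intros m d1 d2 m' d1' d2' Hs Hs'.
  destruct (inD_facts t m d1 d2 Ht Hs) as [_ [_ [_ [A _]]]].
  destruct (inD_facts t m' d1' d2' Ht Hs') as [_ [_ [_ [A' _]]]].
  assert (A0 : Rabs (D - D) <= rP) by (rewrite Rminus_diag, Rabs_R0; lra).
  split.
  - destruct (HPl d2 D A A0) as [_ [_ X]]. rewrite Rminus_diag in A0.
    pose proof (Rabs_triang_inv (PP d2) (PP D)). destruct Hs as [_ [_ Hs]].
    assert (KP * Rabs (d2 - D) <= KP * t) by (apply Rmult_le_compat_l; auto). lra.
  - destruct (HPl d2 d2' A A') as [_ [_ X]]. eapply Rle_trans; [exact X|].
    apply Rmult_le_compat_l; auto. unfold dist3.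
    pose proof (Rabs_pos (m - m')). pose proof (Rabs_pos (d1 - d1')). lra.
Qed.

Lemma LB_LP t : t <= tmax -> LB mu_c2 D t (fun _ d1 _ => lamP f1 g1 d1).
Proof.
  intros Ht. exists (Rabs (lamP f1 g1 D) + KL * t), KL. split; auto.
  intros m d1 d2 m' d1' d2' Hs Hs'.
  destruct (inD_facts t m d1 d2 Ht Hs) as [_ [_ [_ [_ [A _]]]]].
  destruct (inD_facts t m' d1' d2' Ht Hs') as [_ [_ [_ [_ [A' _]]]]].
  assert (A0 : Rabs (D - D) <= rL) by (rewrite Rminus_diag, Rabs_R0; lra).
  split.
  - destruct (HLl d1 D A A0) as [_ [_ X]].
    pose proof (Rabs_triang_inv (lamP f1 g1 d1) (lamP f1 g1 D)). destruct Hs as [_ [Hs _]].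
    assert (KL * Rabs (d1 - D) <= KL * t) by (apply Rmult_le_compat_l; auto). lra.
  - destruct (HLl d1 d1' A A') as [_ [_ X]]. eapply Rle_trans; [exact X|].
    apply Rmult_le_compat_l; auto. unfold dist3.
    pose proof (Rabs_pos (m - m')). pose proof (Rabs_pos (d2 - d2')). lra.
Qed.

Lemma LB_NN t : t <= tmax -> LB mu_c2 D t (fun m _ d2 => NN m d2).
Proof.
  intros Ht. exists (mu_c2 + t), (1 + B1 * KP / D). split.
  { assert (0 <= B1 * KP / D) by (apply Rmult_le_pos; [nra| left; apply Rinv_0_lt_compat; lra]). lra. }
  intros m d1 d2 m' d1' d2' Hs Hs'.
  destruct (NN_pos t m d1 d2 Ht Hs) as [[X1 X2] _]. destruct (inD_facts t m d1 d2 Ht Hs) as [F1 [_ [_ [A [_ F6]]]]].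
  destruct (inD_facts t m' d1' d2' Ht Hs') as [F1' [_ [_ [A' _]]]].
  split. { rewrite Rabs_right by lra. lra. }
  pose proof muc1_pos.
  destruct (PP_pos t m d1 d2 Ht Hs) as [P1 _]. destruct (PP_pos t m' d1' d2' Ht Hs') as [P1' _].
  pose proof (N_lip m d2 m' d2' ltac:(lra) P1 ltac:(lra) P1') as HN.
  destruct (HPl d2 d2' A A') as [_ [_ X]].
  assert (HN2 : D * Rabs (NN m d2 - NN m' d2') <= D * Rabs (m - m') + B1 * (KP * Rabs (d2 - d2'))).
  { eapply Rle_trans; [exact HN|]. apply Rplus_le_compat_l. apply Rmult_le_compat_l; auto. }
  apply Rmult_le_reg_l with D; [lra|].
  unfold dist3. pose proof (Rabs_pos (m - m')). pose proof (Rabs_pos (d1 - d1')). pose proof (Rabs_pos (d2 - d2')).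
  assert (0 <= B1 * KP) by nra.
  replace (D * ((1 + B1 * KP / D) * (Rabs (m - m') + Rabs (d1 - d1') + Rabs (d2 - d2'))))
    with (D * (Rabs (m - m') + Rabs (d1 - d1') + Rabs (d2 - d2')) + B1 * KP * (Rabs (m - m') + Rabs (d1 - d1') + Rabs (d2 - d2'))) by (field; lra).
  nra.
Qed.


Definition ZN n d1 d2 := (g2 / d2) * PP d2 * (g1 * f1 n - d1).
Definition JN11 n (d1 d2 : R) := - D - PP d2 * df1 n.
Definition JN12 n (d1 d2 : R) := - f1 n.
Definition JN21 n (d1 d2 : R) := g1 * PP d2 * df1 n.
Definition JN22 n d1 d2 := g1 * f1 n - d1 - ZN n d1 d2 * df2 (PP d2).
Definition JN23 (n d1 d2 : R) := - f2 (PP d2).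
Definition JN32 n d1 d2 := g2 * ZN n d1 d2 * df2 (PP d2).
Definition JN33 (n d1 d2 : R) := g2 * f2 (PP d2) - d2.
Definition ppN2 n d1 d2 := JN11 n d1 d2 + JN22 n d1 d2 + JN33 n d1 d2.
Definition ppN1 n d1 d2 := - ((JN11 n d1 d2 * JN22 n d1 d2 - JN12 n d1 d2 * JN21 n d1 d2)
   + (JN11 n d1 d2 * JN33 n d1 d2 - 0 * 0) + (JN22 n d1 d2 * JN33 n d1 d2 - JN23 n d1 d2 * JN32 n d1 d2)).
Definition ppN0 n d1 d2 := JN11 n d1 d2 * (JN22 n d1 d2 * JN33 n d1 d2 - JN23 n d1 d2 * JN32 n d1 d2)
   - JN12 n d1 d2 * (JN21 n d1 d2 * JN33 n d1 d2 - JN23 n d1 d2 * 0)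
   + 0 * (JN21 n d1 d2 * JN32 n d1 d2 - JN22 n d1 d2 * 0).

Lemma charcoefs_eq m d1 d2 : charcoefs f1 f2 df1 df2 D g1 g2 m d1 d2 =
  (ppN0 (NN m d2) d1 d2, ppN1 (NN m d2) d1 d2, ppN2 (NN m d2) d1 d2).
Proof. reflexivity. Qed.

Definition dZN n (d1 d2 : R) := (g2 / d2) * PP d2 * (g1 * df1 n).
Definition dJN11 n (d1 d2 : R) := - PP d2 * d2f1 n.
Definition dJN12 n (d1 d2 : R) := - df1 n.
Definition dJN21 n (d1 d2 : R) := g1 * PP d2 * d2f1 n.
Definition dJN22 n d1 d2 := g1 * df1 n - dZN n d1 d2 * df2 (PP d2).
Definition dJN32 n d1 d2 := g2 * dZN n d1 d2 * df2 (PP d2).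
Definition dppN2 n d1 d2 := dJN11 n d1 d2 + dJN22 n d1 d2.
Definition dppN1 n d1 d2 := - ((dJN11 n d1 d2 * JN22 n d1 d2 + JN11 n d1 d2 * dJN22 n d1 d2
     - (dJN12 n d1 d2 * JN21 n d1 d2 + JN12 n d1 d2 * dJN21 n d1 d2))
   + dJN11 n d1 d2 * JN33 n d1 d2 + (dJN22 n d1 d2 * JN33 n d1 d2 - JN23 n d1 d2 * dJN32 n d1 d2)).
Definition dppN0 n d1 d2 := dJN11 n d1 d2 * (JN22 n d1 d2 * JN33 n d1 d2 - JN23 n d1 d2 * JN32 n d1 d2)
   + JN11 n d1 d2 * (dJN22 n d1 d2 * JN33 n d1 d2 - JN23 n d1 d2 * dJN32 n d1 d2)
   - (dJN12 n d1 d2 * (JN21 n d1 d2 * JN33 n d1 d2) + JN12 n d1 d2 * (dJN21 n d1 d2 * JN33 n d1 d2)).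

Lemma Df1 x : Derive (fun y => f1 y) x = df1 x.
Proof. apply is_derive_unique. apply is_derive_Reals. apply Hdf1. Qed.
Lemma Ddf1 x : Derive (fun y => df1 y) x = d2f1 x.
Proof. apply is_derive_unique. apply is_derive_Reals. apply Hd2f1. Qed.
Lemma exf1 x : ex_derive (fun y => f1 y) x.
Proof. exists (df1 x). apply is_derive_Reals. apply Hdf1. Qed.
Lemma exdf1 x : ex_derive (fun y => df1 y) x.
Proof. exists (d2f1 x). apply is_derive_Reals. apply Hd2f1. Qed.

Ltac dsolve := apply is_derive_Reals; auto_derive;
  [repeat split; first [apply exf1 | apply exdf1 | auto] | rewrite ?Df1, ?Ddf1].

Lemma dppN2_ok n d1 d2 : derivable_pt_lim (fun x => ppN2 x d1 d2) n (dppN2 n d1 d2).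
Proof. unfold ppN2, dppN2, JN11, JN22, JN33, ZN, dJN11, dJN22, dZN. dsolve. ring. Qed.
Lemma dppN1_ok n d1 d2 : derivable_pt_lim (fun x => ppN1 x d1 d2) n (dppN1 n d1 d2).
Proof. unfold ppN1, dppN1, JN11, JN12, JN21, JN22, JN23, JN32, JN33, ZN,
  dJN11, dJN12, dJN21, dJN22, dJN32, dZN. dsolve. ring. Qed.
Lemma dppN0_ok n d1 d2 : derivable_pt_lim (fun x => ppN0 x d1 d2) n (dppN0 n d1 d2).
Proof. unfold ppN0, dppN0, JN11, JN12, JN21, JN22, JN23, JN32, JN33, ZN,
  dJN11, dJN12, dJN21, dJN22, dJN32, dZN. dsolve. ring. Qed.


Lemma cont_plus (u w : R -> R) x : continuity_pt u x -> continuity_pt w x -> continuity_pt (fun y => u y + w y) x.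
Proof. intros; apply (continuity_pt_plus u w x); auto. Qed.
Lemma cont_mult (u w : R -> R) x : continuity_pt u x -> continuity_pt w x -> continuity_pt (fun y => u y * w y) x.
Proof. intros; apply (continuity_pt_mult u w x); auto. Qed.
Lemma cont_minus (u w : R -> R) x : continuity_pt u x -> continuity_pt w x -> continuity_pt (fun y => u y - w y) x.
Proof. intros; apply (continuity_pt_minus u w x); auto. Qed.
Lemma cont_const (c : R) x : continuity_pt (fun _ => c) x.
Proof. apply continuity_pt_const. intros a b; auto. Qed.
Lemma cont_comp (u w : R -> R) x : continuity_pt u x -> continuity_pt w (u x) -> continuity_pt (fun y => w (u y)) x.
Proof. intros; apply (continuity_pt_comp u w x); auto. Qed.

Definition slope (f : R -> R) (fd x y : R) := if Req_EM_T y x then fd else (f y - f x) / (y - x).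

Lemma slope_cont f fd x : derivable_pt_lim f x fd -> continuity_pt (slope f fd x) x.
Proof.
  intros H. apply eps_cont. intros e He. destruct (H e He) as [d Hd]. exists d. split; [apply cond_pos|].
  intros y Hy. unfold slope. destruct (Req_EM_T x x) as [_|C]; [|congruence].
  destruct (Req_EM_T y x) as [E|NE].
  - rewrite Rminus_diag, Rabs_R0; lra.
  - replace y with (x + (y - x)) by ring. replace (x + (y - x) - x) with (y - x) by ring.
    apply Hd; auto. intro Z. apply NE. lra.
Qed.

Definition Nd m d2 := 1 / (1 + PP d2 / D * df1 (NN m d2)).

Lemma N_cont m d2 : 0 < m -> 0 < PP d2 -> continuity_pt (fun x => NN x d2) m.
Proof.
  intros Hm HP. apply (lip_cont _ m (m / 2) 1); [lra|]. intros y Hy. apply abslt in Hy.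
  pose proof (N_lip y d2 m d2 ltac:(lra) HP Hm HP) as X. rewrite Rminus_diag, Rabs_R0 in X.
  apply Rmult_le_reg_l with D; lra.
Qed.

Lemma N_deriv m d2 : 0 < m -> 0 < PP d2 -> derivable_pt_lim (fun x => NN x d2) m (Nd m d2).
Proof.
  intros Hm HP. set (Q := fun x => 1 + PP d2 / D * slope f1 (df1 (NN m d2)) (NN m d2) (NN x d2)).
  assert (HQm : Q m = 1 + PP d2 / D * df1 (NN m d2)).
  { unfold Q, slope. destruct (Req_EM_T (NN m d2) (NN m d2)); [auto|congruence]. }
  assert (HQ0 : 0 < Q m).
  { rewrite HQm. destruct (N_spec m d2 Hm HP) as [[X _] _]. pose proof (Hdf1p (NN m d2) ltac:(lra)).
    assert (0 <= PP d2 / D * df1 (NN m d2)). { apply Rmult_le_pos; [|lra]. left; apply Rdiv_lt_0_compat; lra. }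
    lra. }
  unfold Nd. rewrite <- HQm.
  apply (impl_deriv (fun x => NN x d2) Q (fun x => x) m 1 (m / 2)).
  - apply derivable_pt_lim_id.
  - unfold Q. apply cont_plus. apply cont_const. apply cont_mult. apply cont_const.
    apply (cont_comp (fun x => NN x d2) (slope f1 (df1 (NN m d2)) (NN m d2))).
    apply N_cont; auto. apply slope_cont. apply Hdf1.
  - lra.
  - lra.
  - intros y Hy. apply abslt in Hy. assert (Hy0 : 0 < y) by lra.
    destruct (N_spec m d2 Hm HP) as [_ E1]. destruct (N_spec y d2 Hy0 HP) as [_ E2].
    unfold Q, slope. destruct (Req_EM_T (NN y d2) (NN m d2)) as [E|NE].
    + rewrite E in *. rewrite Rminus_diag. assert (y = m) by nra. subst; ring.
    + assert (A1 : PP d2 * f1 (NN y d2) = (y - NN y d2) * D) by lra.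
      assert (A2 : PP d2 * f1 (NN m d2) = (m - NN m d2) * D) by lra.
      replace ((NN y d2 - NN m d2) * (1 + PP d2 / D * ((f1 (NN y d2) - f1 (NN m d2)) / (NN y d2 - NN m d2))))
        with ((NN y d2 - NN m d2) + (PP d2 * f1 (NN y d2) - PP d2 * f1 (NN m d2)) / D)
        by (field; split; [intro Z; apply NE; lra | lra]).
      rewrite A1, A2. field. lra.
Qed.

Lemma pp_deriv_gen (F dF : R -> R -> R -> R) m d1 d2 : 0 < m -> 0 < PP d2 ->
  (forall n, derivable_pt_lim (fun x => F x d1 d2) n (dF n d1 d2)) ->
  derivable_pt_lim (fun x => F (NN x d2) d1 d2) m (dF (NN m d2) d1 d2 * Nd m d2).
Proof.
  intros Hm HP HF.
  exact (derivable_pt_lim_comp (fun x => NN x d2) (fun x => F x d1 d2) m _ _ (N_deriv m d2 Hm HP) (HF _)).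
Qed.


Lemma LB_g2d2 t : t <= tmax -> LB mu_c2 D t (fun _ _ d2 => g2 / d2).
Proof.
  intros Ht. apply (LB_div mu_c2 D t (fun _ _ _ => g2) (fun _ _ d2 => d2) (D / 2)).
  apply LB_const. apply LB_d2. lra. intros m d1 d2 H.
  destruct (inD_facts t m d1 d2 Ht H) as [_ [_ [X _]]]. rewrite Rabs_right; lra.
Qed.

Ltac lbs :=
  repeat match goal with
  | |- LB _ _ _ (fun m d1 d2 => @?a m d1 d2 + @?b m d1 d2) => apply (LB_plus _ _ _ a b)
  | |- LB _ _ _ (fun m d1 d2 => @?a m d1 d2 - @?b m d1 d2) => apply (LB_minus _ _ _ a b)
  | |- LB _ _ _ (fun m d1 d2 => @?a m d1 d2 * @?b m d1 d2) => apply (LB_mult _ _ _ a b)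
  | |- LB _ _ _ (fun m d1 d2 => - @?a m d1 d2) => apply (LB_opp _ _ _ a)
  | |- LB _ _ _ (fun m d1 d2 => @?a m d1 d2 ^ 2) => apply (LB_pow2 _ _ _ a)
  | |- LB _ _ _ (fun m d1 d2 => g2 / d2) => apply LB_g2d2; assumption
  | |- LB _ _ _ (fun m d1 d2 => @?a m d1 d2 / ?c) => apply (LB_divc _ _ _ a c); [|try lra]
  | |- LB _ _ _ (fun m d1 d2 => ?c) => apply LB_const
  | |- LB _ _ _ (fun m d1 d2 => m) => apply LB_m
  | |- LB _ _ _ (fun m d1 d2 => d1) => apply LB_d1
  | |- LB _ _ _ (fun m d1 d2 => d2) => apply LB_d2
  | |- LB _ _ _ (fun m d1 d2 => lamZ f2 g2 d2) => apply LB_PP; assumption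
  | |- LB _ _ _ (fun m d1 d2 => lamP f1 g1 d1) => apply LB_LP; assumption
  | |- LB _ _ _ (fun m d1 d2 => Nfun f1 f2 D g2 m d2) => apply LB_NN; assumption
  | |- LB _ _ _ (fun m d1 d2 => f1 (@?a m d1 d2)) => apply (LB_comp _ _ _ f1 a lip_f1)
  | |- LB _ _ _ (fun m d1 d2 => df1 (@?a m d1 d2)) => apply (LB_comp _ _ _ df1 a lip_df1)
  | |- LB _ _ _ (fun m d1 d2 => d2f1 (@?a m d1 d2)) => apply (LB_comp _ _ _ d2f1 a lip_d2f1)
  | |- LB _ _ _ (fun m d1 d2 => f2 (@?a m d1 d2)) => apply (LB_comp _ _ _ f2 a lip_f2)
  | |- LB _ _ _ (fun m d1 d2 => df2 (@?a m d1 d2)) => apply (LB_comp _ _ _ df2 a lip_df2)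
  end.

Lemma LB_Nd t : t <= tmax -> LB mu_c2 D t (fun m _ d2 => Nd m d2).
Proof.
  intros Ht. unfold Nd.
  apply (LB_div mu_c2 D t (fun _ _ _ => 1) (fun m _ d2 => 1 + lamZ f2 g2 d2 / D * df1 (Nfun f1 f2 D g2 m d2)) 1).
  apply LB_const. lbs. lra.
  intros m d1 d2 H. destruct (PP_pos t m d1 d2 Ht H) as [P1 _]. destruct (NN_pos t m d1 d2 Ht H) as [[N1 _] _].
  pose proof (Hdf1p (NN m d2) ltac:(lra)).
  assert (0 <= PP d2 / D * df1 (NN m d2)). { apply Rmult_le_pos; [|lra]. left; apply Rdiv_lt_0_compat; lra. }
  rewrite Rabs_right; lra.
Qed.

Ltac lbs2 := lbs; try (apply LB_Nd; assumption).

Lemma LB_pp0 t : t <= tmax -> LB mu_c2 D t (fun m d1 d2 => ppN0 (NN m d2) d1 d2).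
Proof. intros Ht. unfold ppN0, JN11, JN12, JN21, JN22, JN23, JN32, JN33, ZN. lbs. Qed.
Lemma LB_pp1 t : t <= tmax -> LB mu_c2 D t (fun m d1 d2 => ppN1 (NN m d2) d1 d2).
Proof. intros Ht. unfold ppN1, JN11, JN12, JN21, JN22, JN23, JN32, JN33, ZN. lbs. Qed.
Lemma LB_pp2 t : t <= tmax -> LB mu_c2 D t (fun m d1 d2 => ppN2 (NN m d2) d1 d2).
Proof. intros Ht. unfold ppN2, JN11, JN12, JN21, JN22, JN23, JN32, JN33, ZN. lbs. Qed.
Lemma LB_dpp0 t : t <= tmax -> LB mu_c2 D t (fun m d1 d2 => dppN0 (NN m d2) d1 d2 * Nd m d2).
Proof. intros Ht. unfold dppN0, JN11, JN12, JN21, JN22, JN23, JN32, JN33, ZN,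
  dJN11, dJN12, dJN21, dJN22, dJN32, dZN. lbs2. Qed.
Lemma LB_dpp1 t : t <= tmax -> LB mu_c2 D t (fun m d1 d2 => dppN1 (NN m d2) d1 d2 * Nd m d2).
Proof. intros Ht. unfold dppN1, JN11, JN12, JN21, JN22, JN23, JN32, JN33, ZN,
  dJN11, dJN12, dJN21, dJN22, dJN32, dZN. lbs2. Qed.
Lemma LB_dpp2 t : t <= tmax -> LB mu_c2 D t (fun m d1 d2 => dppN2 (NN m d2) d1 d2 * Nd m d2).
Proof. intros Ht. unfold dppN2, JN11, JN12, JN21, JN22, JN23, JN32, JN33, ZN,
  dJN11, dJN12, dJN21, dJN22, dJN32, dZN. lbs2. Qed.
Lemma LB_muc1 t : t <= tmax -> LB mu_c2 D t (fun m d1 d2 => mu_c1 f1 f2 D g1 g2 d1 d2).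
Proof. intros Ht. unfold mu_c1. lbs. apply Rmult_integral_contrapositive; split; lra. Qed.


Notation p0 m d1 d2 := (ppN0 (Nfun f1 f2 D g2 m d2) d1 d2).
Notation p1 m d1 d2 := (ppN1 (Nfun f1 f2 D g2 m d2) d1 d2).
Notation p2 m d1 d2 := (ppN2 (Nfun f1 f2 D g2 m d2) d1 d2).

Definition qq m d1 d2 x := p0 m d1 d2 + p1 m d1 d2 * x + p2 m d1 d2 * x ^ 2 - x ^ 3.
Definition brk m d1 d2 x y := p1 m d1 d2 + p2 m d1 d2 * (x + y) - (x ^ 2 + x * y + y ^ 2).

Lemma qq_diff m d1 d2 x y : qq m d1 d2 x - qq m d1 d2 y = (x - y) * brk m d1 d2 x y.
Proof. unfold qq, brk. ring. Qed.

Lemma gammaF_id m d1 d2 a0 : qq m d1 d2 a0 = 0 -> a0 < 0 ->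
  (p2 m d1 d2 - a0) ^ 2 - 4 * (- p1 m d1 d2 - a0 * (p2 m d1 d2 - a0)) < 0 ->
  gammaF f1 f2 df1 df2 D g1 g2 d1 d2 m = p2 m d1 d2 - a0 /\
  (exists a b g, a < 0 /\ g ^ 2 - 4 * b < 0 /\ Mmap a b g = charcoefs f1 f2 df1 df2 D g1 g2 m d1 d2).
Proof.
  intros Hq Ha Hdisc.
  assert (Hex : exists a b g, a < 0 /\ g ^ 2 - 4 * b < 0 /\ Mmap a b g = charcoefs f1 f2 df1 df2 D g1 g2 m d1 d2).
  { exists a0, (- p1 m d1 d2 - a0 * (p2 m d1 d2 - a0)), (p2 m d1 d2 - a0). split; [auto|split; [auto|]].
    rewrite charcoefs_eq. unfold Mmap. unfold qq in Hq. f_equal; [f_equal|]; nra. }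
  split; [|exact Hex].
  assert (Hex2 : exists g, exists a b, a < 0 /\ g ^ 2 - 4 * b < 0 /\ Mmap a b g = charcoefs f1 f2 df1 df2 D g1 g2 m d1 d2).
  { destruct Hex as [a [b [g H]]]. exists g, a, b. exact H. }
  pose proof (epsilon_spec (inhabits 0) _ Hex2) as [a' [b' [Ha' [Hd' HM]]]].
  fold (gammaF f1 f2 df1 df2 D g1 g2 d1 d2 m) in Hd', HM.
  set (g' := gammaF f1 f2 df1 df2 D g1 g2 d1 d2 m) in *.
  rewrite charcoefs_eq in HM. unfold Mmap in HM. injection HM. intros E2 E1 E0.
  assert (Hfac : qq m d1 d2 a0 = (a' - a0) * (b' - g' * a0 + a0 ^ 2)).
  { unfold qq. rewrite <- E0, <- E1, <- E2. ring. }
  rewrite Hq in Hfac.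
  assert (b' - g' * a0 + a0 ^ 2 > 0).
  { assert (4 * (b' - g' * a0 + a0 ^ 2) = (2 * a0 - g') ^ 2 - (g' ^ 2 - 4 * b')) by ring.
    pose proof (pow2_ge_0 (2 * a0 - g')). lra. }
  assert (a' = a0) by nra. lra.
Qed.

Lemma P0_facts : 0 < PP D /\ f2 (PP D) = D / g2.
Proof. assert (A : Rabs (D - D) <= rP) by (rewrite Rminus_diag, Rabs_R0; lra).
  destruct (HPl D D A A) as [X [Y _]]. auto. Qed.

Lemma q_center m : qq m D D (- D) = 0.
Proof.
  destruct P0_facts as [HP Hf]. unfold qq, ppN0, ppN1, ppN2, JN11, JN12, JN21, JN22, JN23, JN32, JN33, ZN.
  rewrite Hf. field. lra.
Qed.

Lemma p2_center m : p2 m D D + D = Afun f1 f2 df1 df2 D g1 g2 m.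
Proof.
  destruct P0_facts as [HP Hf]. unfold Afun, Zfun, ppN2, JN11, JN12, JN21, JN22, JN23, JN32, JN33, ZN.
  rewrite Hf. field. lra.
Qed.

Lemma p1_center m : p1 m D D = D * Afun f1 f2 df1 df2 D g1 g2 m
   - ZN (NN m D) D D * df2 (PP D) * (PP D * df1 (NN m D) + D).
Proof.
  destruct P0_facts as [HP Hf]. unfold Afun, Zfun, ppN1, JN11, JN12, JN21, JN22, JN23, JN32, JN33, ZN.
  rewrite Hf. field. lra.
Qed.

Lemma Z_center_pos : 0 < ZN (NN mu_c2 D) D D.
Proof.
  destruct P0_facts as [HP Hf]. pose proof muc1_pos as Hmc.
  destruct (N_spec mu_c2 D ltac:(lra) HP) as [[N1 N2] E].
  assert (A : Rabs (D - D) <= rL) by (rewrite Rminus_diag, Rabs_R0; lra).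
  destruct (HLl D D A A) as [LL1 [LL2 _]].
  set (N := NN mu_c2 D) in *. set (LP := lamP f1 g1 D) in *.
  assert (HNL : LP < N).
  { destruct (Rlt_le_dec LP N) as [X|X]; auto.
    pose proof (f1_mono N LP ltac:(lra) X) as M.
    unfold mu_c1 in Hmuc2. fold LP in Hmuc2.
    assert (PP D * f1 N <= PP D * (D / g1)) by (rewrite <- LL2; apply Rmult_le_compat_l; lra).
    assert (E' : mu_c2 = N + PP D * f1 N / D) by (field_simplify; [|lra]; apply Rmult_eq_reg_r with D; [|lra]; field_simplify; nra).
    assert (PP D * f1 N / D <= D * PP D / (D * g1)).
    { replace (D * PP D / (D * g1)) with (PP D * (D / g1) / D) by (field; lra).
      apply Rmult_le_compat_r; [left; apply Rinv_0_lt_compat; lra| auto]. }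
    lra. }
  pose proof (f1_incr LP N ltac:(lra) HNL) as H. rewrite LL2 in H.
  unfold ZN. apply Rmult_lt_0_compat. apply Rmult_lt_0_compat. apply Rdiv_lt_0_compat; lra. auto.
  apply Rmult_lt_reg_r with (/ g1). apply Rinv_0_lt_compat; lra.
  replace ((g1 * f1 N - D) * / g1) with (f1 N - D / g1) by (field; lra). lra.
Qed.

Lemma p2c : p2 mu_c2 D D = - D.
Proof. pose proof (p2_center mu_c2). rewrite HA0 in H. lra. Qed.

Lemma p1c : p1 mu_c2 D D < 0.
Proof.
  rewrite p1_center, HA0. pose proof Z_center_pos. destruct P0_facts as [HP _].
  pose proof muc1_pos. destruct (N_spec mu_c2 D ltac:(lra) HP) as [[N1 _] _].
  pose proof (Hdf1p (NN mu_c2 D) ltac:(lra)). pose proof (Hdf2p (PP D) ltac:(lra)).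
  assert (0 < ZN (NN mu_c2 D) D D * df2 (PP D) * (PP D * df1 (NN mu_c2 D) + D)).
  { apply Rmult_lt_0_compat. apply Rmult_lt_0_compat; auto. nra. }
  lra.
Qed.


Definition aR r m d1 d2 := epsilon (inhabits 0) (fun x => - D - r <= x <= - D + r /\ qq m d1 d2 x = 0).

Definition root_hyp r t ms := 0 < r /\ r <= D / 2 /\ t <= tmax /\ 0 < ms /\
  (forall m d1 d2, inD t m d1 d2 -> forall x y, Rabs (x + D) <= r -> Rabs (y + D) <= r -> brk m d1 d2 x y <= - ms) /\
  (forall m d1 d2, inD t m d1 d2 -> Rabs (qq m d1 d2 (- D)) < ms * r).

Lemma qq_cont m d1 d2 : continuity (fun x => - qq m d1 d2 x).
Proof. unfold qq. reg. Qed.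

Lemma aR_spec r t ms m d1 d2 : root_hyp r t ms -> inD t m d1 d2 ->
  Rabs (aR r m d1 d2 + D) <= r /\ qq m d1 d2 (aR r m d1 d2) = 0.
Proof.
  intros [Hr [Hr2 [Ht [Hms [Hs Hq]]]]] Hin.
  assert (Hex : exists x, - D - r <= x <= - D + r /\ qq m d1 d2 x = 0).
  { pose proof (Hq m d1 d2 Hin) as Q0. apply abslt in Q0.
    assert (A1 : Rabs (-D - r + D) <= r) by (replace (-D - r + D) with (- r) by ring; rewrite Rabs_Ropp, Rabs_right; lra).
    assert (A2 : Rabs (-D + r + D) <= r) by (replace (-D + r + D) with r by ring; rewrite Rabs_right; lra).
    assert (A3 : Rabs (-D + D) <= r) by (replace (-D + D) with 0 by ring; rewrite Rabs_R0; lra).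
    pose proof (Hs m d1 d2 Hin _ _ A1 A3) as S1. pose proof (Hs m d1 d2 Hin _ _ A2 A3) as S2.
    pose proof (qq_diff m d1 d2 (-D - r) (-D)) as E1. pose proof (qq_diff m d1 d2 (-D + r) (-D)) as E2.
    replace (-D - r - - D) with (- r) in E1 by ring. replace (-D + r - - D) with r in E2 by ring.
    destruct (IVT (fun x => - qq m d1 d2 x) (-D - r) (-D + r) (qq_cont m d1 d2)) as [z [Hz1 Hz2]].
    - lra.
    - nra.
    - nra.
    - exists z. split; auto. lra. }
  pose proof (epsilon_spec (inhabits 0) _ Hex) as [X Y]. fold (aR r m d1 d2) in X, Y.
  split; auto. apply absle'. lra.
Qed.

Lemma aR_uniq r t ms m d1 d2 x : root_hyp r t ms -> inD t m d1 d2 ->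
  Rabs (x + D) <= r -> qq m d1 d2 x = 0 -> x = aR r m d1 d2.
Proof.
  intros Hh Hin Hx Hqx. destruct (aR_spec r t ms m d1 d2 Hh Hin) as [A B].
  destruct Hh as [_ [_ [_ [Hms [Hs _]]]]].
  pose proof (qq_diff m d1 d2 x (aR r m d1 d2)) as E. rewrite Hqx, B in E.
  pose proof (Hs m d1 d2 Hin x (aR r m d1 d2) Hx A). nra.
Qed.

Lemma LB_aR r t ms : root_hyp r t ms -> LB mu_c2 D t (aR r).
Proof.
  intros Hh. pose proof Hh as [Hr [Hr2 [Ht [Hms [Hs Hq]]]]].
  destruct (LB_pp0 t Ht) as [B0 [C0 [HC0 H0]]]. destruct (LB_pp1 t Ht) as [B1' [C1 [HC1 H1]]].
  destruct (LB_pp2 t Ht) as [B2 [C2 [HC2 H2]]].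
  set (A := D + r).
  exists A, ((C0 + C1 * A + C2 * A ^ 2) / ms). split.
  { apply Rmult_le_pos; [|left; apply Rinv_0_lt_compat; lra]. assert (0 <= A) by (unfold A; lra). nra. }
  intros m d1 d2 m' d1' d2' Hs1 Hs2.
  destruct (aR_spec r t ms m d1 d2 Hh Hs1) as [X1 Y1]. destruct (aR_spec r t ms m' d1' d2' Hh Hs2) as [X2 Y2].
  set (a := aR r m d1 d2) in *. set (a' := aR r m' d1' d2') in *.
  assert (Ha : Rabs a <= A). { apply absle in X1. apply absle'. unfold A. lra. }
  assert (Ha' : Rabs a' <= A). { apply absle in X2. apply absle'. unfold A. lra. }
  split; auto.
  pose proof (qq_diff m d1 d2 a a') as E. rewrite Y1 in E.
  pose proof (Hs m d1 d2 Hs1 a a' X1 X2) as Sb.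
  assert (Kq : qq m d1 d2 a' = qq m d1 d2 a' - qq m' d1' d2' a') by (rewrite Y2; ring).
  assert (Kb : Rabs (qq m d1 d2 a' - qq m' d1' d2' a') <= (C0 + C1 * A + C2 * A ^ 2) * dist3 m d1 d2 m' d1' d2').
  { unfold qq. destruct (H0 _ _ _ _ _ _ Hs1 Hs2) as [_ Z0]. destruct (H1 _ _ _ _ _ _ Hs1 Hs2) as [_ Z1].
    destruct (H2 _ _ _ _ _ _ Hs1 Hs2) as [_ Z2].
    set (e0 := p0 m d1 d2 - p0 m' d1' d2') in *. set (e1 := p1 m d1 d2 - p1 m' d1' d2') in *.
    set (e2 := p2 m d1 d2 - p2 m' d1' d2') in *.
    replace (p0 m d1 d2 + p1 m d1 d2 * a' + p2 m d1 d2 * a' ^ 2 - a' ^ 3 -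
        (p0 m' d1' d2' + p1 m' d1' d2' * a' + p2 m' d1' d2' * a' ^ 2 - a' ^ 3)) with
      (e0 + e1 * a' + e2 * a' ^ 2) by (unfold e0, e1, e2; ring).
    pose proof (dist3_pos m d1 d2 m' d1' d2') as Dp. set (dd := dist3 m d1 d2 m' d1' d2') in *.
    eapply Rle_trans. apply Rabs_triang. eapply Rle_trans. apply Rplus_le_compat_r. apply Rabs_triang.
    rewrite !Rabs_mult. rewrite <- RPow_abs.
    pose proof (Rabs_pos a'). pose proof (Rabs_pos e1). pose proof (Rabs_pos e2).
    assert (Rabs e1 * Rabs a' <= C1 * dd * A) by (apply Rmult_le_compat; lra).
    assert (Rabs a' ^ 2 <= A ^ 2) by (apply pow_incr; lra).
    assert (Rabs e2 * Rabs a' ^ 2 <= C2 * dd * A ^ 2) by (apply Rmult_le_compat; try lra; apply pow_le; lra).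
    nra. }
  rewrite Kq in E. 
  assert (Habs : Rabs (a - a') * ms <= Rabs (qq m d1 d2 a' - qq m' d1' d2' a')).
  { rewrite <- Kq. replace (qq m d1 d2 a') with (- ((a - a') * brk m d1 d2 a a')) by lra.
    rewrite Rabs_Ropp, Rabs_mult. apply Rmult_le_compat_l. apply Rabs_pos.
    rewrite Rabs_left1 by lra. lra. }
  apply Rmult_le_reg_r with ms; [lra|].
  replace ((C0 + C1 * A + C2 * A ^ 2) / ms * dist3 m d1 d2 m' d1' d2' * ms)
    with ((C0 + C1 * A + C2 * A ^ 2) * dist3 m d1 d2 m' d1' d2') by (field; lra).
  lra.
Qed.


Definition gg r m d1 d2 := p2 m d1 d2 - aR r m d1 d2.
Definition bb r m d1 d2 := - p1 m d1 d2 - aR r m d1 d2 * gg r m d1 d2.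
Definition disc r m d1 d2 := gg r m d1 d2 ^ 2 - 4 * bb r m d1 d2.
Definition Q0 r m d1 d2 := brk m d1 d2 (aR r m d1 d2) (aR r m d1 d2).
Definition dpp0 m d1 d2 := dppN0 (NN m d2) d1 d2 * Nd m d2.
Definition dpp1 m d1 d2 := dppN1 (NN m d2) d1 d2 * Nd m d2.
Definition dpp2 m d1 d2 := dppN2 (NN m d2) d1 d2 * Nd m d2.
Definition dgf r m d1 d2 := dpp2 m d1 d2 -
  (- (dpp0 m d1 d2 + dpp1 m d1 d2 * aR r m d1 d2 + dpp2 m d1 d2 * aR r m d1 d2 ^ 2)) / Q0 r m d1 d2.

Ltac lbs3 r t ms Hh :=
  repeat match goal with
  | |- LB _ _ _ (fun m d1 d2 => @?a m d1 d2 + @?b m d1 d2) => apply (LB_plus _ _ _ a b)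
  | |- LB _ _ _ (fun m d1 d2 => @?a m d1 d2 - @?b m d1 d2) => apply (LB_minus _ _ _ a b)
  | |- LB _ _ _ (fun m d1 d2 => @?a m d1 d2 * @?b m d1 d2) => apply (LB_mult _ _ _ a b)
  | |- LB _ _ _ (fun m d1 d2 => - @?a m d1 d2) => apply (LB_opp _ _ _ a)
  | |- LB _ _ _ (fun m d1 d2 => @?a m d1 d2 ^ 2) => apply (LB_pow2 _ _ _ a)
  | |- LB _ _ _ (fun m d1 d2 => ?c) => apply LB_const
  | |- LB _ _ _ (fun m d1 d2 => aR r m d1 d2) => apply (LB_aR r t ms Hh)
  | |- LB _ _ _ (fun m d1 d2 => ppN0 (Nfun f1 f2 D g2 m d2) d1 d2) => apply LB_pp0; assumption
  | |- LB _ _ _ (fun m d1 d2 => ppN1 (Nfun f1 f2 D g2 m d2) d1 d2) => apply LB_pp1; assumption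
  | |- LB _ _ _ (fun m d1 d2 => ppN2 (Nfun f1 f2 D g2 m d2) d1 d2) => apply LB_pp2; assumption
  | |- LB _ _ _ (fun m d1 d2 => dpp0 m d1 d2) => apply LB_dpp0; assumption
  | |- LB _ _ _ (fun m d1 d2 => dpp1 m d1 d2) => apply LB_dpp1; assumption
  | |- LB _ _ _ (fun m d1 d2 => dpp2 m d1 d2) => apply LB_dpp2; assumption
  end.

Lemma LB_disc r t ms : root_hyp r t ms -> LB mu_c2 D t (disc r).
Proof.
  intros Hh. pose proof Hh as [_ [_ [Ht _]]]. unfold disc, bb, gg. lbs3 r t ms Hh.
Qed.

Lemma Q0_bound r t ms m d1 d2 : root_hyp r t ms -> inD t m d1 d2 -> Q0 r m d1 d2 <= - ms.
Proof.
  intros Hh Hin. destruct (aR_spec r t ms m d1 d2 Hh Hin) as [A _].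
  destruct Hh as [_ [_ [_ [_ [Hs _]]]]]. apply Hs; auto.
Qed.

Lemma LB_dgf r t ms : root_hyp r t ms -> LB mu_c2 D t (dgf r).
Proof.
  intros Hh. pose proof Hh as [_ [_ [Ht [Hms _]]]]. unfold dgf.
  apply (LB_minus _ _ _ (fun m d1 d2 => dpp2 m d1 d2)). lbs3 r t ms Hh.
  apply (LB_div _ _ _ _ (Q0 r) ms). lbs3 r t ms Hh.
  unfold Q0, brk. lbs3 r t ms Hh. lra.
  intros m d1 d2 Hin. pose proof (Q0_bound r t ms m d1 d2 Hh Hin). rewrite Rabs_left1; lra.
Qed.

Lemma LB_cont t u m d1 d2 : LB mu_c2 D t u -> Rabs (m - mu_c2) < t -> Rabs (d1 - D) <= t -> Rabs (d2 - D) <= t ->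
  continuity_pt (fun x => u x d1 d2) m.
Proof.
  intros [B [C [HC H]]] Hm H1 H2. apply (lip_cont _ m (t - Rabs (m - mu_c2)) C). lra.
  intros y Hy. assert (Hin : inD t y d1 d2).
  { split; [|split; auto]. pose proof (Rabs_triang (y - m) (m - mu_c2)).
    replace (y - m + (m - mu_c2)) with (y - mu_c2) in H0 by ring. lra. }
  assert (Hin0 : inD t m d1 d2) by (split; [lra|split; auto]).
  destruct (H _ _ _ _ _ _ Hin Hin0) as [_ X]. unfold dist3 in X.
  rewrite !Rminus_diag, !Rabs_R0, !Rplus_0_r in X. exact X.
Qed.

Lemma S_deriv (u0 u1 u2 : R -> R) l0 l1 l2 x a :
  derivable_pt_lim u0 x l0 -> derivable_pt_lim u1 x l1 -> derivable_pt_lim u2 x l2 ->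
  derivable_pt_lim (fun y => - (u0 y + u1 y * a + u2 y * a ^ 2)) x (- (l0 + l1 * a + l2 * a ^ 2)).
Proof.
  intros H0 H1 H2. apply is_derive_Reals in H0, H1, H2. apply is_derive_Reals.
  auto_derive. repeat split; [exists l0; auto | exists l1; auto | exists l2; auto].
  assert (E0 : Derive (fun y : R => u0 y) x = l0) by (apply is_derive_unique; exact H0).
  assert (E1 : Derive (fun y : R => u1 y) x = l1) by (apply is_derive_unique; exact H1).
  assert (E2 : Derive (fun y : R => u2 y) x = l2) by (apply is_derive_unique; exact H2).
  rewrite E0, E1, E2. ring.
Qed.

Lemma gam_deriv r t ms mu d1 d2 : root_hyp r t ms ->
  (forall m d1 d2, inD t m d1 d2 -> disc r m d1 d2 < 0) ->
  Rabs (mu - mu_c2) < t -> Rabs (d1 - D) <= t -> Rabs (d2 - D) <= t ->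
  derivable_pt_lim (fun x => gammaF f1 f2 df1 df2 D g1 g2 d1 d2 x) mu (dgf r mu d1 d2).
Proof.
  intros Hh Hdisc Hm H1 H2. pose proof Hh as [Hr [Hr2 [Ht [Hms [Hs Hq]]]]].
  set (rho := t - Rabs (mu - mu_c2)).
  assert (Hrho : 0 < rho) by (unfold rho; lra).
  assert (Hin : forall y, Rabs (y - mu) < rho -> inD t y d1 d2).
  { intros y Hy. split; [|split; auto]. pose proof (Rabs_triang (y - mu) (mu - mu_c2)).
    replace (y - mu + (mu - mu_c2)) with (y - mu_c2) in H by ring. unfold rho in Hy. lra. }
  assert (Hin0 : inD t mu d1 d2) by (split; [lra|split; auto]).
  destruct (inD_facts t mu d1 d2 Ht Hin0) as [Fm _]. pose proof muc1_pos.
  destruct (PP_pos t mu d1 d2 Ht Hin0) as [HP _].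
  set (a0 := aR r mu d1 d2).
  assert (Hda : derivable_pt_lim (fun x => aR r x d1 d2) mu
     ((- (dpp0 mu d1 d2 + dpp1 mu d1 d2 * a0 + dpp2 mu d1 d2 * a0 ^ 2)) / Q0 r mu d1 d2)).
  { apply (impl_deriv (fun x => aR r x d1 d2) (fun x => brk x d1 d2 (aR r x d1 d2) a0)
       (fun x => - (p0 x d1 d2 + p1 x d1 d2 * a0 + p2 x d1 d2 * a0 ^ 2)) mu _ rho).
    - apply S_deriv; unfold dpp0, dpp1, dpp2.
      + apply pp_deriv_gen; [lra | exact HP | intro n; apply dppN0_ok].
      + apply pp_deriv_gen; [lra | exact HP | intro n; apply dppN1_ok].
      + apply pp_deriv_gen; [lra | exact HP | intro n; apply dppN2_ok].
    - unfold brk.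
      pose proof (LB_cont t _ mu d1 d2 (LB_pp1 t Ht) Hm H1 H2) as C1.
      pose proof (LB_cont t _ mu d1 d2 (LB_pp2 t Ht) Hm H1 H2) as C2.
      pose proof (LB_cont t _ mu d1 d2 (LB_aR r t ms Hh) Hm H1 H2) as C3.
      apply cont_minus. apply cont_plus. exact C1. apply cont_mult. exact C2.
      apply cont_plus. exact C3. apply cont_const.
      apply cont_plus. apply cont_plus. apply (cont_mult (fun y => aR r y d1 d2) (fun y => aR r y d1 d2 ^ 1)).
      exact C3. apply (cont_mult (fun y => aR r y d1 d2) (fun _ => 1)). exact C3. apply cont_const.
      apply cont_mult. exact C3. apply cont_const. apply cont_const.
    - pose proof (Q0_bound r t ms mu d1 d2 Hh Hin0) as HQ. unfold Q0 in HQ. fold a0 in HQ |- *. lra.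
    - exact Hrho.
    - intros y Hy. destruct (aR_spec r t ms y d1 d2 Hh (Hin y Hy)) as [_ Ey].
      destruct (aR_spec r t ms mu d1 d2 Hh Hin0) as [_ Emu]. fold a0 in Emu.
      pose proof (qq_diff y d1 d2 (aR r y d1 d2) a0) as E. rewrite Ey in E.
      fold a0. rewrite <- E. unfold qq in Emu |- *. ring_simplify. nra. }
  unfold dgf. fold a0.
  apply (deriv_loc (fun x => p2 x d1 d2 - aR r x d1 d2) _ mu _ rho Hrho).
  - intros y Hy. destruct (aR_spec r t ms y d1 d2 Hh (Hin y Hy)) as [A Ey].
    apply gammaF_id; auto. apply absle in A. lra.
    pose proof (Hdisc y d1 d2 (Hin y Hy)). unfold disc, bb, gg in H0. exact H0.
  - apply derivable_pt_lim_minus; auto.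
    unfold dpp2. apply pp_deriv_gen; [lra | exact HP | intro n; apply dppN2_ok].
Qed.


Lemma aR_center r t ms m : root_hyp r t ms -> inD t m D D -> aR r m D D = - D.
Proof.
  intros Hh Hin. symmetry. apply (aR_uniq r t ms); auto.
  replace (- D + D) with 0 by ring. rewrite Rabs_R0. destruct Hh; lra.
  apply q_center.
Qed.

Lemma A_deriv r t ms mu : root_hyp r t ms ->
  (forall m d1 d2, inD t m d1 d2 -> disc r m d1 d2 < 0) ->
  Rabs (mu - mu_c2) < t ->
  derivable_pt_lim (fun m => Afun f1 f2 df1 df2 D g1 g2 m) mu (dgf r mu D D).
Proof.
  intros Hh Hdisc Hm.
  assert (H0 : Rabs (D - D) <= t) by (rewrite Rminus_diag, Rabs_R0; pose proof (Rabs_pos (mu - mu_c2)); lra).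
  pose proof (gam_deriv r t ms mu D D Hh Hdisc Hm H0 H0) as G.
  apply (deriv_loc (fun x => gammaF f1 f2 df1 df2 D g1 g2 D D x) _ mu _ (t - Rabs (mu - mu_c2))); [lra| |exact G].
  intros y Hy. assert (Hin : inD t y D D).
  { split; [|split; auto]. pose proof (Rabs_triang (y - mu) (mu - mu_c2)).
    replace (y - mu + (mu - mu_c2)) with (y - mu_c2) in H by ring. lra. }
  destruct (aR_spec r t ms y D D Hh Hin) as [A Ey].
  rewrite (proj1 (gammaF_id y D D (aR r y D D) Ey ltac:(apply absle in A; destruct Hh; lra)
     ltac:(pose proof (Hdisc y D D Hin) as X; unfold disc, bb, gg in X; exact X))).
  rewrite (aR_center r t ms y Hh Hin). rewrite <- p2_center. ring.
Qed.


Lemma inD_vc t : 0 <= t -> inD t mu_c2 D D.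
Proof. intros. unfold inD, inS. rewrite !Rminus_diag, !Rabs_R0. lra. Qed.

Lemma inD_mono t t' m d1 d2 : t' <= t -> inD t' m d1 d2 -> inD t m d1 d2.
Proof. unfold inD, inS. intros; lra. Qed.

Lemma dist_vc t m d1 d2 : inD t m d1 d2 -> dist3 m d1 d2 mu_c2 D D <= 3 * t.
Proof. unfold inD, inS, dist3. intros; lra. Qed.

Lemma root_hyp_mono r t t' ms : 0 <= t' -> t' <= t -> root_hyp r t ms -> root_hyp r t' ms.
Proof.
  intros H0 Ht [A [B [C [E [F G]]]]]. repeat split; auto. lra.
  intros m d1 d2 Hin. apply F. eapply inD_mono; eauto.
  intros m d1 d2 Hin. apply G. eapply inD_mono; eauto.
Qed.

Lemma main_sec : exists dhat eps C, 0 < dhat /\ 0 < eps /\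
    forall mu D1 D2,
      mu_c2 - dhat <= mu <= mu_c2 + dhat ->
      sqrt ((D1 - D) ^ 2 + (D2 - D) ^ 2) < eps ->
      mu_c1 f1 f2 D g1 g2 D1 D2 < mu /\
      (exists a b g, a < 0 /\ g ^ 2 - 4 * b < 0 /\
         Mmap a b g = charcoefs f1 f2 df1 df2 D g1 g2 mu D1 D2) /\
      exists dg dA,
        derivable_pt_lim (fun m => gammaF f1 f2 df1 df2 D g1 g2 D1 D2 m) mu dg /\
        derivable_pt_lim (fun m => Afun f1 f2 df1 df2 D g1 g2 m) mu dA /\
        Rabs (dg - dA) <= C * sqrt ((D1 - D) ^ 2 + (D2 - D) ^ 2).
Proof.
  pose proof tmax_pos as Ht0. set (t0 := tmax) in *.
  destruct (LB_pp0 t0 (Rle_refl _)) as [Bq0 [C0 [HC0 Hp0]]].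
  destruct (LB_pp1 t0 (Rle_refl _)) as [Bq1 [C1 [HC1 Hp1]]].
  destruct (LB_pp2 t0 (Rle_refl _)) as [Bq2 [C2 [HC2 Hp2]]].
  destruct (LB_muc1 t0 (Rle_refl _)) as [Bm [Cm [HCm Hmc]]].
  pose proof p1c as Hp1c. pose proof p2c as Hp2c.
  set (p1c := p1 mu_c2 D D) in *.
  set (r := D / 28). set (ms := D * D / 2).
  set (K1 := C1 + 3 * D * C2 + 1). set (K0 := C0 + C1 * D + C2 * D * D + 1).
  assert (HK1 : 1 <= K1) by (unfold K1; nra). assert (HK0 : 1 <= K0) by (unfold K0; nra).
  set (t1 := Rmin t0 (Rmin (D * D / (12 * K1)) (D * D * D / (168 * K0)))).
  assert (Ht1a : t1 <= t0) by apply Rmin_l.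
  assert (Ht1b : t1 <= D * D / (12 * K1)) by (eapply Rle_trans; [apply Rmin_r| apply Rmin_l]).
  assert (Ht1c : t1 <= D * D * D / (168 * K0)) by (eapply Rle_trans; [apply Rmin_r| apply Rmin_r]).
  assert (Ht1p : 0 < t1).
  { assert (0 < D * D / (12 * K1)) by (apply Rdiv_lt_0_compat; nra).
    assert (0 < D * D * D / (168 * K0)) by (apply Rdiv_lt_0_compat; [apply Rmult_lt_0_compat; nra | nra]).
    unfold t1. apply Rmin_pos; [exact Ht0|]. apply Rmin_pos; auto. }
  assert (Hh1 : root_hyp r t1 ms).
  { unfold root_hyp. split; [unfold r; lra|]. split; [unfold r; lra|]. split; [unfold t0 in Ht1a; exact Ht1a|].
    split; [unfold ms; nra|]. split.
    - intros m d1 d2 Hin x y Hx Hy.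
      assert (Hin0 : inD t0 m d1 d2) by (eapply inD_mono; [exact Ht1a| exact Hin]).
      assert (Hc0 : inD t0 mu_c2 D D) by (apply inD_vc; lra).
      pose proof (dist_vc t1 m d1 d2 Hin) as Dv.
      destruct (Hp1 _ _ _ _ _ _ Hin0 Hc0) as [_ E1]. destruct (Hp2 _ _ _ _ _ _ Hin0 Hc0) as [_ E2].
      fold p1c in E1. rewrite Hp2c in E2.
      set (dd := dist3 m d1 d2 mu_c2 D D) in *.
      set (e1 := p1 m d1 d2 - p1c) in *. set (e2 := p2 m d1 d2 - - D) in *.
      set (u := x + D) in *. set (w := y + D) in *.
      assert (Eb : brk m d1 d2 x y = p1c - D * D + e1 + e2 * (x + y) + 2 * D * (u + w) - (u * u + u * w + w * w)).
      { unfold brk, e1, e2, u, w. ring. }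
      rewrite Eb. apply absle in Hx. apply absle in Hy. fold u in Hx. fold w in Hy.
      assert (A1 : e1 <= C1 * (3 * t1)). { apply absle in E1. assert (C1 * dd <= C1 * (3 * t1)) by (apply Rmult_le_compat_l; lra). lra. }
      assert (A2 : e2 * (x + y) <= C2 * (3 * t1) * (3 * D)).
      { apply Rle_trans with (Rabs e2 * Rabs (x + y)). rewrite <- Rabs_mult. apply Rle_abs.
        apply Rmult_le_compat. apply Rabs_pos. apply Rabs_pos. eapply Rle_trans. exact E2.
        apply Rmult_le_compat_l; lra. apply absle'. unfold r in Hx, Hy. unfold u, w in *. lra. }
      assert (A3 : 2 * D * (u + w) <= 4 * D * r) by (unfold r in *; nra).
      assert (A4 : 0 <= u * u + u * w + w * w) by nra.
      assert (A5 : 3 * t1 * (C1 + 3 * D * C2) <= D * D / 4).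
      { apply Rle_trans with (3 * t1 * K1). apply Rmult_le_compat_l; [lra|unfold K1; lra].
        apply Rle_trans with (3 * (D * D / (12 * K1)) * K1). apply Rmult_le_compat_r; lra.
        right. field. lra. }
      unfold ms, r in *. nra.
    - intros m d1 d2 Hin.
      assert (Hin0 : inD t0 m d1 d2) by (eapply inD_mono; [exact Ht1a| exact Hin]).
      assert (Hc0 : inD t0 mu_c2 D D) by (apply inD_vc; lra).
      pose proof (dist_vc t1 m d1 d2 Hin) as Dv.
      destruct (Hp0 _ _ _ _ _ _ Hin0 Hc0) as [_ E0].
      destruct (Hp1 _ _ _ _ _ _ Hin0 Hc0) as [_ E1]. destruct (Hp2 _ _ _ _ _ _ Hin0 Hc0) as [_ E2].
      set (dd := dist3 m d1 d2 mu_c2 D D) in *.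
      pose proof (q_center mu_c2) as Qc.
      assert (Eq : qq m d1 d2 (- D) = (p0 m d1 d2 - p0 mu_c2 D D) - (p1 m d1 d2 - p1 mu_c2 D D) * D
          + (p2 m d1 d2 - p2 mu_c2 D D) * (D * D)).
      { rewrite <- (Rminus_0_r (qq m d1 d2 (- D))). rewrite <- Qc. unfold qq. ring. }
      rewrite Eq.
      set (e0 := p0 m d1 d2 - p0 mu_c2 D D) in *. set (e1 := p1 m d1 d2 - p1 mu_c2 D D) in *.
      set (e2 := p2 m d1 d2 - p2 mu_c2 D D) in *.
      eapply Rle_lt_trans. apply Rabs_triang. eapply Rle_lt_trans. apply Rplus_le_compat_r.
      unfold Rminus. apply Rabs_triang. rewrite Rabs_Ropp, !Rabs_mult, (Rabs_right D) by nra.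
      assert (C0 * dd + C1 * dd * D + C2 * dd * (D * D) <= (K0 - 1) * (3 * t1)).
      { unfold K0. replace ((C0 + C1 * D + C2 * D * D + 1 - 1) * (3 * t1)) with
          ((C0 + C1 * D + C2 * D * D) * (3 * t1)) by ring.
        replace (C0 * dd + C1 * dd * D + C2 * dd * (D * D)) with ((C0 + C1 * D + C2 * D * D) * dd) by ring.
        apply Rmult_le_compat_l; [nra|lra]. }
      assert ((K0 - 1) * (3 * t1) < K0 * (3 * t1)) by lra.
      assert (K0 * (3 * t1) <= D * D / 2 * (D / 28)).
      { apply Rle_trans with (K0 * (3 * (D * D * D / (168 * K0)))). apply Rmult_le_compat_l; lra.
        right. field. lra. }
      assert (Rabs e1 * D <= C1 * dd * D) by (apply Rmult_le_compat_r; lra).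
      assert (Rabs e2 * (D * D) <= C2 * dd * (D * D)) by (apply Rmult_le_compat_r; nra).
      unfold ms, r. lra. }
  destruct (LB_disc r t1 ms Hh1) as [Bd [Cd [HCd Hdl]]].
  assert (Hc1 : inD t1 mu_c2 D D) by (apply inD_vc; lra).
  assert (Hdc : disc r mu_c2 D D = 4 * p1c).
  { unfold disc, bb, gg. rewrite (aR_center r t1 ms mu_c2 Hh1 Hc1). fold p1c. rewrite Hp2c. ring. }
  set (mc1c := mu_c1 f1 f2 D g1 g2 D D) in *.
  set (t2 := Rmin t1 (Rmin (- p1c / (3 * (Cd + 1))) ((mu_c2 - mc1c) / (2 * (3 * Cm + 1))))).
  assert (Ht2a : t2 <= t1) by apply Rmin_l.
  assert (Ht2b : t2 <= - p1c / (3 * (Cd + 1))) by (eapply Rle_trans; [apply Rmin_r| apply Rmin_l]).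
  assert (Ht2c : t2 <= (mu_c2 - mc1c) / (2 * (3 * Cm + 1))) by (eapply Rle_trans; [apply Rmin_r| apply Rmin_r]).
  assert (Ht2p : 0 < t2).
  { assert (0 < - p1c / (3 * (Cd + 1))) by (apply Rdiv_lt_0_compat; lra).
    assert (0 < (mu_c2 - mc1c) / (2 * (3 * Cm + 1))) by (apply Rdiv_lt_0_compat; lra).
    unfold t2. apply Rmin_pos; [exact Ht1p|]. apply Rmin_pos; auto. }
  assert (Hh2 : root_hyp r t2 ms) by (apply (root_hyp_mono r t1); [lra|lra|exact Hh1]).
  assert (Hdisc : forall m d1 d2, inD t2 m d1 d2 -> disc r m d1 d2 < 0).
  { intros m d1 d2 Hin. assert (Hin1 : inD t1 m d1 d2) by (eapply inD_mono; [exact Ht2a|exact Hin]).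
    destruct (Hdl _ _ _ _ _ _ Hin1 Hc1) as [_ X]. rewrite Hdc in X. apply absle in X.
    pose proof (dist_vc t2 m d1 d2 Hin).
    assert (Cd * dist3 m d1 d2 mu_c2 D D <= Cd * (3 * t2)) by (apply Rmult_le_compat_l; lra).
    assert (Cd * (3 * t2) <= Cd * (- p1c / (Cd + 1))).
    { apply Rmult_le_compat_l; auto. replace (- p1c / (Cd + 1)) with (3 * (- p1c / (3 * (Cd + 1)))) by (field; lra). lra. }
    assert (Cd * (- p1c / (Cd + 1)) < - p1c).
    { replace (Cd * (- p1c / (Cd + 1))) with (- p1c - (- p1c) / (Cd + 1)) by (field; lra).
      assert (0 < - p1c / (Cd + 1)) by (apply Rdiv_lt_0_compat; lra). lra. }
    lra. }
  destruct (LB_dgf r t2 ms Hh2) as [Bg [Cg [HCg Hgl]]].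
  exists (t2 / 2), (t2 / 2), (2 * Cg). split; [lra|]. split; [lra|].
  intros mu D1 D2 Hmu Hsq.
  set (rho := sqrt ((D1 - D) ^ 2 + (D2 - D) ^ 2)) in *.
  assert (HD1 : Rabs (D1 - D) <= rho).
  { rewrite <- sqrt_Rsqr_abs. apply sqrt_le_1_alt. unfold Rsqr. pose proof (pow2_ge_0 (D2 - D)). simpl. lra. }
  assert (HD2 : Rabs (D2 - D) <= rho).
  { rewrite <- sqrt_Rsqr_abs. apply sqrt_le_1_alt. unfold Rsqr. pose proof (pow2_ge_0 (D1 - D)). simpl. lra. }
  assert (Hm2 : Rabs (mu - mu_c2) < t2) by (apply abslt'; lra).
  assert (Hin : inD t2 mu D1 D2) by (unfold inD, inS; lra).
  assert (HinD : inD t2 mu D D) by (unfold inD, inS; rewrite Rminus_diag, Rabs_R0; lra).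
  split.
  { assert (Hin0 : inD t0 mu D1 D2) by (eapply inD_mono; [|exact Hin]; lra).
    assert (Hc0 : inD t0 mu_c2 D D) by (apply inD_vc; lra).
    destruct (Hmc _ _ _ _ _ _ Hin0 Hc0) as [_ X]. apply absle in X. fold mc1c in X.
    pose proof (dist_vc t2 mu D1 D2 Hin).
    assert (Cm * dist3 mu D1 D2 mu_c2 D D <= Cm * (3 * t2)) by (apply Rmult_le_compat_l; lra).
    assert ((2 * (3 * Cm + 1)) * t2 <= mu_c2 - mc1c).
    { replace (mu_c2 - mc1c) with ((2 * (3 * Cm + 1)) * ((mu_c2 - mc1c) / (2 * (3 * Cm + 1)))) by (field; lra).
      apply Rmult_le_compat_l; lra. }
    lra. }
  destruct (aR_spec r t2 ms mu D1 D2 Hh2 Hin) as [Ar Qr].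
  assert (Hneg : aR r mu D1 D2 < 0) by (apply absle in Ar; assert (r = D / 28) by reflexivity; lra).
  pose proof (Hdisc mu D1 D2 Hin) as Hds. unfold disc, bb, gg in Hds.
  split; [exact (proj2 (gammaF_id mu D1 D2 _ Qr Hneg Hds))|].
  exists (dgf r mu D1 D2), (dgf r mu D D). split; [|split].
  - apply (gam_deriv r t2 ms); auto; lra.
  - apply (A_deriv r t2 ms); auto.
  - destruct (Hgl _ _ _ _ _ _ Hin HinD) as [_ X]. eapply Rle_trans; [exact X|].
    unfold dist3. rewrite Rminus_diag, Rabs_R0.
    assert (Rabs (D1 - D) + Rabs (D2 - D) <= 2 * rho) by lra. nra.
Qed.

End Main.

Theorem lemma3p7
  (D g1 g2 : R) (f1 df1 d2f1 d3f1 f2 df2 d2f2 : R -> R) (L1 L2 mu_c2 : R)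
  (HD : 0 < D) (Hg1 : 0 < g1) (Hg2 : 0 < g2)
  (Hdf1 : forall x, derivable_pt_lim f1 x (df1 x))
  (Hd2f1 : forall x, derivable_pt_lim df1 x (d2f1 x))
  (Hd3f1 : forall x, derivable_pt_lim d2f1 x (d3f1 x))
  (Hc3f1 : continuity d3f1)
  (Hdf2 : forall x, derivable_pt_lim f2 x (df2 x))
  (Hd2f2 : forall x, derivable_pt_lim df2 x (d2f2 x))
  (Hc2f2 : continuity d2f2)
  (Hf1nn : forall x, 0 <= x -> 0 <= f1 x)
  (Hf2nn : forall x, 0 <= x -> 0 <= f2 x)
  (Hf1b : exists B, forall x, 0 <= x -> f1 x <= B)
  (Hf2b : exists B, forall x, 0 <= x -> f2 x <= B)
  (Hf10 : f1 0 = 0) (Hf20 : f2 0 = 0)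
  (Hdf1p : forall x, 0 <= x -> 0 < df1 x)
  (Hdf2p : forall x, 0 <= x -> 0 < df2 x)
  (HL1 : lim_infty f1 L1) (HL2 : lim_infty f2 L2)
  (Hlim : exists eps, 0 < eps /\
     forall d, Rabs (d - D) < eps -> d / g1 < L1 /\ d / g2 < L2)
  (Hstab : df2 (lamZ f2 g2 D) < D / (g2 * lamZ f2 g2 D))
  (Hmuc2 : mu_c1 f1 f2 D g1 g2 D D < mu_c2)
  (HA0 : Afun f1 f2 df1 df2 D g1 g2 mu_c2 = 0) :
  exists dhat eps C, 0 < dhat /\ 0 < eps /\
    forall mu D1 D2,
      mu_c2 - dhat <= mu <= mu_c2 + dhat ->
      sqrt ((D1 - D) ^ 2 + (D2 - D) ^ 2) < eps ->
      mu_c1 f1 f2 D g1 g2 D1 D2 < mu /\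
      (exists a b g, a < 0 /\ g ^ 2 - 4 * b < 0 /\
         Mmap a b g = charcoefs f1 f2 df1 df2 D g1 g2 mu D1 D2) /\
      exists dg dA,
        derivable_pt_lim (fun m => gammaF f1 f2 df1 df2 D g1 g2 D1 D2 m) mu dg /\
        derivable_pt_lim (fun m => Afun f1 f2 df1 df2 D g1 g2 m) mu dA /\
        Rabs (dg - dA) <= C * sqrt ((D1 - D) ^ 2 + (D2 - D) ^ 2).
Proof.
  destruct Hlim as [e0 [He0 Hl]].
  assert (cdf1 : forall x, continuity_pt df1 x) by (intro x; apply (der_cont _ _ _ (Hd2f1 x))).
  assert (cdf2 : forall x, continuity_pt df2 x) by (intro x; apply (der_cont _ _ _ (Hd2f2 x))).
  destruct (lam_lip f2 df2 g2 L2 Hdf2 cdf2 Hdf2p Hf20 Hg2 HL2 D e0 HD He0) as [rP [KP [HrP [HKP HPl]]]].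
  { intros d Hd. apply (Hl d Hd). }
  destruct (lam_lip f1 df1 g1 L1 Hdf1 cdf1 Hdf1p Hf10 Hg1 HL1 D e0 HD He0) as [rL [KL [HrL [HKL HLl]]]].
  { intros d Hd. apply (Hl d Hd). }
  destruct Hf1b as [B1 HB1f].
  assert (HB1 : 0 <= B1) by (pose proof (HB1f 0 (Rle_refl 0)); lra).
  exact (main_sec D g1 g2 f1 df1 d2f1 d3f1 f2 df2 d2f2 mu_c2 HD Hg1 Hg2 Hdf1 Hd2f1 Hd3f1 Hc3f1
    Hdf2 Hd2f2 Hc2f2 Hf10 Hdf1p Hdf2p Hmuc2 HA0 rP KP rL KL B1 HrP HKP HrL HKL HB1
    HPl HLl HB1f).
Qed.
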